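(* Let $k_1,k_2,m$ be positive integers. The map $\Lambda:J^1_{k,m}(\mathcal O_K)\to J_{k,m}(\mathcal O_K)$, $\phi\mapsto\sum_{\epsilon\in\mathcal O_K^\times}\phi|_k\epsilon I$ (with $k=k_1+k_2$), is well defined, and the bilinear map $H$ induces a linear map $H:J_{k_1,m}\otimes J_{k_2,m}\to J^1_{k_1+k_2,m}(\mathcal O_K)$, so that the composite $$J_{k_1,m}\otimes J_{k_2,m}\xrightarrow{H}J^1_{k_1+k_2,m}(\mathcal O_K)\xrightarrow{\Lambda}J_{k_1+k_2,m}(\mathcal O_K)$$ is a linear map which maps tensor products of cusp forms to cusp forms.
   Context: Notation: $\mathcal H$ is the upper half plane, $e(x)=e^{2\pi i x}$, $K=\mathbb Q(i)$, $\mathcal O_K=\mathbb Z[i]$, $\mathcal O_K^\times=\{\pm1,\pm i\}$, $N(x)=x\bar x$, $\mathcal O_K^\sharp=\frac i2\mathcal O_K$. $J_{k,m}$ is the space of classical (Eichler–Zagier) Jacobi forms of weight $k$, index $m$. For $\psi$ on $\mathcal H\times\mathbb C^2$ and $\epsilon\in\mathcal O_K^\times$, $(\psi|_k\epsilon I)(\tau,z_1,z_2)=\epsilon^{-k}\psi(\tau,\epsilon z_1,\bar\epsilon z_2)$. For $\epsilon\in\mathcal O_K^\times$, $M=\begin{pmatrix}a&b\\c&d\end{pmatrix}\in SL(2,\mathbb Z)$: $(\phi|_{k,m}\epsilon M)(\tau,z_1,z_2)=\epsilon^{-k}(c\tau+d)^{-k}e^{-2\pi i m c z_1z_2/(c\tau+d)}\phi\bigl(M\tau,\tfrac{\epsilon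 z_1}{c\tau+d},\tfrac{\bar\epsilon z_2}{c\tau+d}\bigr)$; for $\lambda,\mu\in\mathcal O_K$, $(\phi|_m[\lambda,\mu])(\tau,z_1,z_2)=e^{2\pi i m(N(\lambda)\tau+\bar\lambda z_1+\lambda z_2)}\phi(\tau,z_1+\lambda\tau+\mu,z_2+\bar\lambda\tau+\bar\mu)$. $J_{k,m}(\mathcal O_K)$ (resp. $J^1_{k,m}(\mathcal O_K)$) is the space of holomorphic $\phi$ on $\mathcal H\times\mathbb C^2$ with $\phi|_{k,m}\epsilon M=\phi$ for all $\epsilon\in\mathcal O_K^\times$ (resp. only $\epsilon=1$) and all $M\in SL(2,\mathbb Z)$, $\phi|_m[\lambda,\mu]=\phi$ for all $\lambda,\mu\in\mathcal O_K$, and with a Fourier expansion $\sum_{n\ge0}\sum_{r\in\mathcal O_K^\sharp,\,nm\ge N(r)}c_\phi(n,r)e(n\tau+rz_1+\bar rz_2)$; cusp forms are those with $c_\phi(n,r)=0$ whenever $nm=N(r)$. For $\phi_1\in J_{k_1,m}$, $\phi_2\in J_{k_2,m}$, $H(\phi_1,\phi_2)(\tau,z_1,z_2)=\sum_{\epsilon\in\mathcal O_K^\times}\bigl(\phi_1(\tau,\frac12(z_1+z_2))\phi_2(\tau,\frac i2(z_1-z_2))\bigr)|_{k_1+k_2}\epsilon I$. *)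

(* Defs.v *)
From Stdlib Require Import Reals ZArith List.
Open Scope R_scope.

Record C := mkC { Re : R ; Im : R }.

Definition C0 : C := mkC 0 0.
Definition C1 : C := mkC 1 0.
Definition Ci : C := mkC 0 1.
Definition RtoC (x : R) : C := mkC x 0.
Definition ZtoC (n : Z) : C := RtoC (IZR n).
Definition NtoC (n : nat) : C := RtoC (INR n).
Definition Cadd (z w : C) : C := mkC (Re z + Re w) (Im z + Im w).
Definition Copp (z : C) : C := mkC (- Re z) (- Im z).
Definition Csub (z w : C) : C := Cadd z (Copp w).
Definition Cmul (z w : C) : C :=
  mkC (Re z * Re w - Im z * Im w) (Re z * Im w + Im z * Re w).
Definition Cinv (z : C) : C :=
  let d := Re z * Re z + Im z * Im z in mkC (Re z / d) (- Im z / d).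
Definition Cdiv (z w : C) : C := Cmul z (Cinv w).
Definition Cconj (z : C) : C := mkC (Re z) (- Im z).
Definition Cabs (z : C) : R := sqrt (Re z * Re z + Im z * Im z).
Fixpoint Cpow (z : C) (n : nat) : C :=
  match n with O => C1 | S n' => Cmul z (Cpow z n') end.
Definition Cexp (z : C) : C :=
  mkC (exp (Re z) * cos (Im z)) (exp (Re z) * sin (Im z)).
Definition ee (z : C) : C := Cexp (Cmul (mkC 0 (2 * PI)) z).

Definition Csum {A : Type} (f : A -> C) (l : list A) : C :=
  fold_right (fun a acc => Cadd (f a) acc) C0 l.
Definition Rsum {A : Type} (f : A -> R) (l : list A) : R :=
  fold_right (fun a acc => f a + acc) 0 l.

Definition Ccv (u : nat -> C) (l : C) : Prop :=
  Un_cv (fun n => Re (u n)) (Re l) /\ Un_cv (fun n => Im (u n)) (Im l).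

Definition Cdifferentiable (f : C -> C) (z : C) : Prop :=
  exists L : C, forall eps, 0 < eps -> exists delta, 0 < delta /\
    forall h : C, 0 < Cabs h -> Cabs h < delta ->
      Cabs (Csub (Cdiv (Csub (f (Cadd z h)) (f z)) h) L) < eps.

Definition inH (t : C) : Prop := 0 < Im t.

Definition holo2 (f : C -> C -> C) : Prop :=
  forall t z, inH t ->
    (forall eps, 0 < eps -> exists delta, 0 < delta /\
       forall t' z', Cabs (Csub t' t) < delta -> Cabs (Csub z' z) < delta ->
         Cabs (Csub (f t' z') (f t z)) < eps) /\
    Cdifferentiable (fun u => f u z) t /\
    Cdifferentiable (fun u => f t u) z.

Definition holo3 (f : C -> C -> C -> C) : Prop :=
  forall t z1 z2, inH t ->
    (forall eps, 0 < eps -> exists delta, 0 < delta /\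
       forall t' z1' z2', Cabs (Csub t' t) < delta -> Cabs (Csub z1' z1) < delta ->
         Cabs (Csub z2' z2) < delta ->
         Cabs (Csub (f t' z1' z2') (f t z1 z2)) < eps) /\
    Cdifferentiable (fun u => f u z1 z2) t /\
    Cdifferentiable (fun u => f t u z2) z1 /\
    Cdifferentiable (fun u => f t z1 u) z2.

Definition zrange (B : nat) : list Z :=
  map (fun k => (Z.of_nat k - Z.of_nat B)%Z) (seq 0 (2 * B + 1)).

Definition moebius (a b c d : Z) (t : C) : C :=
  Cdiv (Cadd (Cmul (ZtoC a) t) (ZtoC b)) (Cadd (Cmul (ZtoC c) t) (ZtoC d)).

Definition slash_cl (k m : nat) (a b c d : Z) (phi : C -> C -> C) : C -> C -> C :=
  fun t z =>
    let j := Cadd (Cmul (ZtoC c) t) (ZtoC d) in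
    Cmul (Cinv (Cpow j k))
      (Cmul (ee (Copp (Cdiv (Cmul (Cmul (NtoC m) (ZtoC c)) (Cmul z z)) j)))
            (phi (moebius a b c d t) (Cdiv z j))).

Definition heis_cl (m : nat) (l mu : Z) (phi : C -> C -> C) : C -> C -> C :=
  fun t z =>
    Cmul (ee (Cmul (NtoC m) (Cadd (Cmul (ZtoC (l * l)) t) (Cmul (ZtoC (2 * l)) z))))
         (phi t (Cadd (Cadd z (Cmul (ZtoC l) t)) (ZtoC mu))).

Definition cl_range (m n : nat) : list Z :=
  filter (fun r => Z.leb (r * r) (4 * Z.of_nat n * Z.of_nat m))
         (zrange (2 * n * m + 1)).

Definition cl_term (c : nat -> Z -> C) (t z : C) (n : nat) (r : Z) : C :=
  Cmul (c n r) (ee (Cadd (Cmul (NtoC n) t) (Cmul (ZtoC r) z))).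

Definition HasFourier_cl (m : nat) (phi : C -> C -> C) (c : nat -> Z -> C) : Prop :=
  forall t z, inH t ->
    Ccv (fun N => Csum (fun n => Csum (cl_term c t z n) (cl_range m n)) (seq 0 (S N)))
        (phi t z) /\
    exists M, forall N,
      Rsum (fun n => Rsum (fun r => Cabs (cl_term c t z n r)) (cl_range m n)) (seq 0 (S N))
      <= M.

Definition jacobi_cl_inv (k m : nat) (phi : C -> C -> C) : Prop :=
  holo2 phi /\
  (forall a b c d : Z, (a * d - b * c = 1)%Z ->
     forall t z, inH t -> slash_cl k m a b c d phi t z = phi t z) /\
  (forall l mu : Z, forall t z, inH t -> heis_cl m l mu phi t z = phi t z).

Definition JacobiForm_cl (k m : nat) (phi : C -> C -> C) : Prop :=
  jacobi_cl_inv k m phi /\ exists c, HasFourier_cl m phi c.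

Definition JacobiCusp_cl (k m : nat) (phi : C -> C -> C) : Prop :=
  jacobi_cl_inv k m phi /\
  exists c, HasFourier_cl m phi c /\
    forall n r, (4 * Z.of_nat n * Z.of_nat m = r * r)%Z -> c n r = C0.

Definition gauss (a b : Z) : C := mkC (IZR a) (IZR b).
Definition unitsOK : list C := C1 :: Copp C1 :: Ci :: Copp Ci :: nil.
Definition Nrm (x : C) : C := Cmul x (Cconj x).

Definition slashI (k : nat) (eps : C) (psi : C -> C -> C -> C) : C -> C -> C -> C :=
  fun t z1 z2 => Cmul (Cinv (Cpow eps k)) (psi t (Cmul eps z1) (Cmul (Cconj eps) z2)).

Definition slashK (k m : nat) (eps : C) (a b c d : Z) (phi : C -> C -> C -> C)
  : C -> C -> C -> C :=
  fun t z1 z2 =>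
    let j := Cadd (Cmul (ZtoC c) t) (ZtoC d) in
    Cmul (Cinv (Cpow eps k))
     (Cmul (Cinv (Cpow j k))
      (Cmul (ee (Copp (Cdiv (Cmul (Cmul (NtoC m) (ZtoC c)) (Cmul z1 z2)) j)))
            (phi (moebius a b c d t) (Cdiv (Cmul eps z1) j)
                 (Cdiv (Cmul (Cconj eps) z2) j)))).

Definition heisK (m : nat) (l mu : C) (phi : C -> C -> C -> C) : C -> C -> C -> C :=
  fun t z1 z2 =>
    Cmul (ee (Cmul (NtoC m)
                (Cadd (Cadd (Cmul (Nrm l) t) (Cmul (Cconj l) z1)) (Cmul l z2))))
         (phi t (Cadd (Cadd z1 (Cmul l t)) mu)
                (Cadd (Cadd z2 (Cmul (Cconj l) t)) (Cconj mu))).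

(* r in O_K^# = (i/2) O_K is written r = (x + i y)/2 with x, y in Z;
   N(r) <= nm iff x^2 + y^2 <= 4nm *)
Definition rK (xy : Z * Z) : C := mkC (IZR (fst xy) / 2) (IZR (snd xy) / 2).
Definition K_range (m n : nat) : list (Z * Z) :=
  filter (fun xy => Z.leb (fst xy * fst xy + snd xy * snd xy)
                          (4 * Z.of_nat n * Z.of_nat m))
         (list_prod (zrange (2 * n * m + 1)) (zrange (2 * n * m + 1))).

Definition K_term (c : nat -> Z * Z -> C) (t z1 z2 : C) (n : nat) (xy : Z * Z) : C :=
  Cmul (c n xy)
       (ee (Cadd (Cadd (Cmul (NtoC n) t) (Cmul (rK xy) z1)) (Cmul (Cconj (rK xy)) z2))).

Definition HasFourier_K (m : nat) (phi : C -> C -> C -> C) (c : nat -> Z * Z -> C)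
  : Prop :=
  forall t z1 z2, inH t ->
    Ccv (fun N => Csum (fun n => Csum (K_term c t z1 z2 n) (K_range m n)) (seq 0 (S N)))
        (phi t z1 z2) /\
    exists M, forall N,
      Rsum (fun n => Rsum (fun xy => Cabs (K_term c t z1 z2 n xy)) (K_range m n))
           (seq 0 (S N)) <= M.

Definition jacobiK_inv (units : list C) (k m : nat) (phi : C -> C -> C -> C) : Prop :=
  holo3 phi /\
  (forall eps, In eps units -> forall a b c d : Z, (a * d - b * c = 1)%Z ->
     forall t z1 z2, inH t -> slashK k m eps a b c d phi t z1 z2 = phi t z1 z2) /\
  (forall a b a' b' : Z, forall t z1 z2, inH t ->
     heisK m (gauss a b) (gauss a' b') phi t z1 z2 = phi t z1 z2).

Definition JacobiForm_K (k m : nat) (phi : C -> C -> C -> C) : Prop :=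
  jacobiK_inv unitsOK k m phi /\ exists c, HasFourier_K m phi c.

Definition JacobiForm1_K (k m : nat) (phi : C -> C -> C -> C) : Prop :=
  jacobiK_inv (C1 :: nil) k m phi /\ exists c, HasFourier_K m phi c.

Definition JacobiCusp_K (k m : nat) (phi : C -> C -> C -> C) : Prop :=
  jacobiK_inv unitsOK k m phi /\
  exists c, HasFourier_K m phi c /\
    forall n xy, (fst xy * fst xy + snd xy * snd xy = 4 * Z.of_nat n * Z.of_nat m)%Z ->
      c n xy = C0.

Definition LambdaK (k : nat) (phi : C -> C -> C -> C) : C -> C -> C -> C :=
  fun t z1 z2 => Csum (fun eps => slashI k eps phi t z1 z2) unitsOK.

Definition Hmap (k1 k2 : nat) (phi1 phi2 : C -> C -> C) : C -> C -> C -> C :=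
  fun t z1 z2 =>
    Csum (fun eps =>
      slashI (k1 + k2) eps
        (fun t' w1 w2 =>
           Cmul (phi1 t' (Cmul (mkC (1/2) 0) (Cadd w1 w2)))
                (phi2 t' (Cmul (mkC 0 (1/2)) (Csub w1 w2))))
        t z1 z2) unitsOK.

Definition lin2 (a : C) (f g : C -> C -> C) : C -> C -> C :=
  fun t z => Cadd (Cmul a (f t z)) (g t z).
Definition lin3 (a : C) (f g : C -> C -> C -> C) : C -> C -> C -> C :=
  fun t z1 z2 => Cadd (Cmul a (f t z1 z2)) (g t z1 z2).

(* Main.v *)
Require Import Defs.
From Stdlib Require Import Reals ZArith List Lra Lia Psatz Permutation FunctionalExtensionality.
Import Defs.
Open Scope R_scope.

Lemma Ceq : forall z w : C, Re z = Re w -> Im z = Im w -> z = w.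
Proof. intros [a b] [c d]; simpl; intros -> ->; reflexivity. Qed.

Ltac cunf := unfold Csub, Cdiv, Nrm, rK, ZtoC, NtoC; unfold Cadd, Cmul, Copp, Cconj, C0, C1, Ci, RtoC, ZtoC, NtoC, Nrm, gauss, Cdiv, rK; cbn [Re Im fst snd].
Ltac ceq := apply Ceq; cunf; ring.

Lemma Cring_th : ring_theory C0 C1 Cadd Cmul Csub Copp (@eq C).
Proof. constructor; intros; ceq. Qed.
Add Ring Cring : Cring_th.

Lemma C1_neq_C0 : C1 <> C0.
Proof. intro H; assert (H1 := f_equal Re H); simpl in H1; lra. Qed.

Lemma Cnz_norm : forall z, z <> C0 -> Re z * Re z + Im z * Im z <> 0.
Proof.
  intros [a b] Hz H; apply Hz; simpl in H.
  assert (a = 0) by nra. assert (b = 0) by nra. subst; reflexivity.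
Qed.

Lemma Cinv_l : forall z, z <> C0 -> Cmul (Cinv z) z = C1.
Proof.
  intros z Hz; pose proof (Cnz_norm z Hz); destruct z as [a b]; simpl in *.
  unfold Cinv; apply Ceq; simpl; field; auto.
Qed.

Lemma Cfield_th : field_theory C0 C1 Cadd Cmul Csub Copp Cdiv Cinv (@eq C).
Proof.
  constructor.
  - exact Cring_th.
  - exact C1_neq_C0.
  - reflexivity.
  - exact Cinv_l.
Qed.
Add Field Cfield : Cfield_th.

Lemma Cmul_nz : forall z w, z <> C0 -> w <> C0 -> Cmul z w <> C0.
Proof.
  intros z w Hz Hw H. apply Hz.
  transitivity (Cmul (Cmul z w) (Cinv w)). field; auto. rewrite H; ring.
Qed.

Lemma Cpow_nz : forall z n, z <> C0 -> Cpow z n <> C0.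
Proof. intros z n Hz; induction n; simpl. exact C1_neq_C0. apply Cmul_nz; auto. Qed.

Lemma Cpow_add : forall z a b, Cpow z (a + b) = Cmul (Cpow z a) (Cpow z b).
Proof. intros z a b; induction a; simpl. ring. rewrite IHa; ring. Qed.

Lemma Cpow_mul : forall z w n, Cpow (Cmul z w) n = Cmul (Cpow z n) (Cpow w n).
Proof. intros z w n; induction n; simpl. ring. rewrite IHn; ring. Qed.

Lemma Cconj_mul : forall z w, Cconj (Cmul z w) = Cmul (Cconj z) (Cconj w).
Proof. intros; ceq. Qed.
Lemma Cconj_add : forall z w, Cconj (Cadd z w) = Cadd (Cconj z) (Cconj w).
Proof. intros; ceq. Qed.

Lemma ZtoC_mul : forall a b, ZtoC (a * b) = Cmul (ZtoC a) (ZtoC b).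
Proof. intros; apply Ceq; cunf; rewrite ?mult_IZR; ring. Qed.
Lemma ZtoC_add : forall a b, ZtoC (a + b) = Cadd (ZtoC a) (ZtoC b).
Proof. intros; apply Ceq; cunf; rewrite ?plus_IZR; ring. Qed.
Lemma ZtoC_opp : forall a, ZtoC (- a) = Copp (ZtoC a).
Proof. intros; apply Ceq; cunf; rewrite ?opp_IZR; ring. Qed.
Lemma ZtoC_0 : ZtoC 0 = C0.
Proof. apply Ceq; cunf; reflexivity. Qed.
Lemma ZtoC_1 : ZtoC 1 = C1.
Proof. apply Ceq; cunf; reflexivity. Qed.
Lemma Cconj_ZtoC : forall a, Cconj (ZtoC a) = ZtoC a.
Proof. intros; ceq. Qed.

Lemma Cexp_add : forall z w, Cexp (Cadd z w) = Cmul (Cexp z) (Cexp w).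
Proof.
  intros [a b] [c d]; unfold Cexp; apply Ceq; cunf;
  rewrite ?exp_plus, ?cos_plus, ?sin_plus; ring.
Qed.
Lemma ee_add : forall z w, ee (Cadd z w) = Cmul (ee z) (ee w).
Proof. intros; unfold ee. rewrite <- Cexp_add. f_equal; ring. Qed.
Lemma ee_0 : ee C0 = C1.
Proof.
  unfold ee, Cexp. cunf.
  replace (0 * 0 - 2 * PI * 0) with 0 by ring.
  replace (0 * 0 + 2 * PI * 0) with 0 by ring.
  rewrite exp_0, cos_0, sin_0. apply Ceq; simpl; ring.
Qed.
Lemma ee_opp : forall z, Cmul (ee (Copp z)) (ee z) = C1.
Proof. intros; rewrite <- ee_add, <- ee_0; f_equal; ring. Qed.
Lemma ee_ext : forall z w, z = w -> ee z = ee w.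
Proof. intros; subst; auto. Qed.
Lemma ee_nz : forall z, ee z <> C0.
Proof. intros z H. pose proof (ee_opp z). rewrite H in H0. apply C1_neq_C0. rewrite <- H0; ring. Qed.

Lemma sqrt_sq_le : forall x y, 0 <= y -> x <= y * y -> sqrt x <= y.
Proof.
  intros x y Hy Hx. rewrite <- (sqrt_square y Hy). destruct (Rle_lt_dec 0 x).
  apply sqrt_le_1; nra. rewrite sqrt_neg_0; [|lra]. apply sqrt_pos.
Qed.

Lemma Cabs_nonneg : forall z, 0 <= Cabs z.
Proof. intros; apply sqrt_pos. Qed.

Lemma Cabs_sq : forall z, Cabs z * Cabs z = Re z * Re z + Im z * Im z.
Proof. intros; unfold Cabs; apply sqrt_sqrt; nra. Qed.

Lemma Cabs_mul : forall z w, Cabs (Cmul z w) = Cabs z * Cabs w.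
Proof.
  intros [a b] [c d]; unfold Cabs; simpl.
  rewrite <- sqrt_mult by nra. f_equal; ring.
Qed.

Lemma Cabs_add : forall z w, Cabs (Cadd z w) <= Cabs z + Cabs w.
Proof.
  intros z w. unfold Cabs at 1. apply sqrt_sq_le.
  pose proof (Cabs_nonneg z); pose proof (Cabs_nonneg w); lra.
  pose proof (Cabs_sq z); pose proof (Cabs_sq w).
  pose proof (Cabs_nonneg z); pose proof (Cabs_nonneg w).
  destruct z as [a b]; destruct w as [c d]; simpl in *.
  set (x := Cabs {| Re := a; Im := b |}) in *.
  set (y := Cabs {| Re := c; Im := d |}) in *.
  clearbody x y.
  assert (a * c + b * d <= x * y).
  { assert ((a*c+b*d)*(a*c+b*d) <= (x*y)*(x*y)).
    { replace ((x*y)*(x*y)) with ((x*x)*(y*y)) by ring. rewrite H, H0. pose proof (Rle_0_sqr (a*d-b*c)). unfold Rsqr in *. nra. }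
    assert (0 <= x*y) by nra. nra. }
  nra.
Qed.

Lemma Cabs_opp : forall z, Cabs (Copp z) = Cabs z.
Proof. intros [a b]; unfold Cabs; simpl; f_equal; ring. Qed.

Lemma Cabs_sub_sym : forall z w, Cabs (Csub z w) = Cabs (Csub w z).
Proof. intros. replace (Csub z w) with (Copp (Csub w z)) by ring. apply Cabs_opp. Qed.

Lemma Cabs_C0 : Cabs C0 = 0.
Proof. unfold Cabs; simpl. replace (0*0+0*0) with 0 by ring. apply sqrt_0. Qed.

Lemma Cabs_C1 : Cabs C1 = 1.
Proof. unfold Cabs; simpl. replace (1*1+0*0) with 1 by ring. apply sqrt_1. Qed.

Lemma Cabs_eq0 : forall z, Cabs z = 0 -> z = C0.
Proof.
  intros z H. pose proof (Cabs_sq z). rewrite H in H0.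
  destruct z as [a b]; simpl in *. apply Ceq; simpl; nra.
Qed.

Lemma Cabs_pos : forall z, z <> C0 -> 0 < Cabs z.
Proof.
  intros z Hz. destruct (Cabs_nonneg z); auto. exfalso; apply Hz, Cabs_eq0; auto.
Qed.

Lemma Re_le : forall z, Rabs (Re z) <= Cabs z.
Proof.
  intros z. pose proof (Cabs_sq z); pose proof (Cabs_nonneg z).
  apply Rabs_le; split; nra.
Qed.
Lemma Im_le : forall z, Rabs (Im z) <= Cabs z.
Proof.
  intros z. pose proof (Cabs_sq z); pose proof (Cabs_nonneg z).
  apply Rabs_le; split; nra.
Qed.
Lemma Cabs_le_ReIm : forall z, Cabs z <= Rabs (Re z) + Rabs (Im z).
Proof.
  intros z. unfold Cabs. apply sqrt_sq_le.
  pose proof (Rabs_pos (Re z)); pose proof (Rabs_pos (Im z)); lra.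
  pose proof (Rabs_pos (Re z)); pose proof (Rabs_pos (Im z)).
  assert (Re z * Re z <= Rabs (Re z) * Rabs (Re z)) by (rewrite <- Rabs_mult; apply RRle_abs).
  assert (Im z * Im z <= Rabs (Im z) * Rabs (Im z)) by (rewrite <- Rabs_mult; apply RRle_abs).
  nra.
Qed.

Lemma Cabs_inv : forall z, z <> C0 -> Cabs (Cinv z) = / Cabs z.
Proof.
  intros z Hz. pose proof (Cabs_pos z Hz).
  assert (Cabs (Cinv z) * Cabs z = 1).
  { rewrite <- Cabs_mul, Cinv_l by auto. apply Cabs_C1. }
  field_simplify_eq; [|lra]. lra.
Qed.

Lemma Cabs_RtoC : forall x, Cabs (RtoC x) = Rabs x.
Proof.
  intros x; unfold Cabs, RtoC; simpl. replace (x*x+0*0) with (x*x) by ring.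
  rewrite <- Rsqr_def. apply sqrt_Rsqr_abs.
Qed.

Lemma Cabs_tri : forall a b c, Cabs (Csub a c) <= Cabs (Csub a b) + Cabs (Csub b c).
Proof.
  intros. replace (Csub a c) with (Cadd (Csub a b) (Csub b c)) by ring. apply Cabs_add.
Qed.

Lemma add_lemma : forall f0 g0 e, 0 < e -> exists d, 0 < d /\
  forall f g, Cabs (Csub f f0) < d -> Cabs (Csub g g0) < d ->
    Cabs (Csub (Cadd f g) (Cadd f0 g0)) < e.
Proof.
  intros f0 g0 e He. exists (e/2). split. lra. intros f g H1 H2.
  replace (Csub (Cadd f g) (Cadd f0 g0)) with (Cadd (Csub f f0) (Csub g g0)) by ring.
  pose proof (Cabs_add (Csub f f0) (Csub g g0)). lra.
Qed.

Lemma mul_lemma : forall f0 g0 e, 0 < e -> exists d, 0 < d /\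
  forall f g, Cabs (Csub f f0) < d -> Cabs (Csub g g0) < d ->
    Cabs (Csub (Cmul f g) (Cmul f0 g0)) < e.
Proof.
  intros f0 g0 e He.
  pose proof (Cabs_nonneg f0) as Hf0; pose proof (Cabs_nonneg g0) as Hg0.
  set (d := Rmin 1 (e / (2 * (Cabs f0 + Cabs g0 + 1)))).
  assert (Hd1 : d <= 1) by apply Rmin_l.
  assert (Hd2 : d <= e / (2 * (Cabs f0 + Cabs g0 + 1))) by apply Rmin_r.
  assert (Hd0 : 0 < d). { apply Rmin_pos. lra. apply Rdiv_lt_0_compat; lra. }
  exists d; split; auto. intros f g H1 H2.
  replace (Csub (Cmul f g) (Cmul f0 g0)) with
    (Cadd (Cmul (Csub f f0) (Cadd (Csub g g0) g0)) (Cmul f0 (Csub g g0))) by ring.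
  eapply Rle_lt_trans. apply Cabs_add. rewrite !Cabs_mul.
  eapply Rle_lt_trans.
  apply Rplus_le_compat. apply Rmult_le_compat. apply Cabs_nonneg. apply Cabs_nonneg.
  apply Rlt_le, H1. apply Cabs_add.
  apply Rmult_le_compat_l. apply Cabs_nonneg. apply Rlt_le, H2.
  assert (Cabs (Csub g g0) <= 1) by lra.
  assert (d * (Cabs (Csub g g0) + Cabs g0) + Cabs f0 * d <= d * (Cabs f0 + Cabs g0 + 1)) by nra.
  assert (d * (Cabs f0 + Cabs g0 + 1) <= e / 2).
  { apply (Rmult_le_compat_r (Cabs f0 + Cabs g0 + 1)) in Hd2; [|lra].
    replace (e / (2 * (Cabs f0 + Cabs g0 + 1)) * (Cabs f0 + Cabs g0 + 1)) with (e/2) in Hd2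
      by (field; lra). lra. }
  lra.
Qed.

Definition cont3 (f : C -> C -> C -> C) t z1 z2 :=
  forall eps, 0 < eps -> exists delta, 0 < delta /\
       forall t' z1' z2', Cabs (Csub t' t) < delta -> Cabs (Csub z1' z1) < delta ->
         Cabs (Csub z2' z2) < delta ->
         Cabs (Csub (f t' z1' z2') (f t z1 z2)) < eps.
Definition cont2 (f : C -> C -> C) t z :=
  forall eps, 0 < eps -> exists delta, 0 < delta /\
       forall t' z', Cabs (Csub t' t) < delta -> Cabs (Csub z' z) < delta ->
         Cabs (Csub (f t' z') (f t z)) < eps.

Lemma holo3_iff : forall f, holo3 f <-> forall t z1 z2, inH t ->
  cont3 f t z1 z2 /\ Cdifferentiable (fun u => f u z1 z2) t /\
    Cdifferentiable (fun u => f t u z2) z1 /\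
    Cdifferentiable (fun u => f t z1 u) z2.
Proof. intros; unfold holo3, cont3; tauto. Qed.

Lemma holo2_cont : forall f t z, holo2 f -> inH t -> cont2 f t z.
Proof. intros f t z H Ht; exact (proj1 (H t z Ht)). Qed.

Lemma min3_pos : forall a b c, 0 < a -> 0 < b -> 0 < c -> 0 < Rmin a (Rmin b c).
Proof. intros; repeat apply Rmin_pos; auto. Qed.

Ltac min_facts d1 d2 :=
  pose proof (Rmin_l d1 d2); pose proof (Rmin_r d1 d2).

Lemma cont3_binop : forall (op : C -> C -> C) f g t z1 z2,
  (forall a0 b0 e, 0 < e -> exists d, 0 < d /\ forall a b,
     Cabs (Csub a a0) < d -> Cabs (Csub b b0) < d -> Cabs (Csub (op a b) (op a0 b0)) < e) ->
  cont3 f t z1 z2 -> cont3 g t z1 z2 ->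
  cont3 (fun t z1 z2 => op (f t z1 z2) (g t z1 z2)) t z1 z2.
Proof.
  intros op f g t z1 z2 Hop Hf Hg e He.
  destruct (Hop (f t z1 z2) (g t z1 z2) e He) as [d [Hd Hd']].
  destruct (Hf d Hd) as [d1 [Hd1 H1]]. destruct (Hg d Hd) as [d2 [Hd2 H2]].
  exists (Rmin d1 d2); split. apply Rmin_pos; auto.
  min_facts d1 d2. intros t' z1' z2' A B Cc. apply Hd'.
  apply H1; lra. apply H2; lra.
Qed.

Lemma cont3_add : forall f g t z1 z2, cont3 f t z1 z2 -> cont3 g t z1 z2 ->
  cont3 (fun t z1 z2 => Cadd (f t z1 z2) (g t z1 z2)) t z1 z2.
Proof. intros; apply cont3_binop; auto. apply add_lemma. Qed.
Lemma cont3_mul : forall f g t z1 z2, cont3 f t z1 z2 -> cont3 g t z1 z2 ->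
  cont3 (fun t z1 z2 => Cmul (f t z1 z2) (g t z1 z2)) t z1 z2.
Proof. intros; apply cont3_binop; auto. apply mul_lemma. Qed.
Lemma cont3_const : forall c t z1 z2, cont3 (fun _ _ _ => c) t z1 z2.
Proof.
  intros c t z1 z2 e He; exists 1; split; [lra|]; intros.
  replace (Csub c c) with C0 by ring. rewrite Cabs_C0; auto.
Qed.

Lemma cont3_comp2 : forall (g : C -> C -> C) (L : C -> C -> C) K t z1 z2,
  0 < K ->
  (forall a b, Cabs (Csub (L a b) (L z1 z2)) <= K * (Cabs (Csub a z1) + Cabs (Csub b z2))) ->
  cont2 g t (L z1 z2) -> cont3 (fun t z1 z2 => g t (L z1 z2)) t z1 z2.
Proof.
  intros g L K t z1 z2 HK HL Hg e He.
  destruct (Hg e He) as [d [Hd H]].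
  exists (Rmin d (d / (2 * K))); split.
  apply Rmin_pos; auto. apply Rdiv_lt_0_compat; lra.
  min_facts d (d / (2*K)). intros t' a b A B Cc. apply H. lra.
  eapply Rle_lt_trans. apply HL.
  assert (Cabs (Csub a z1) + Cabs (Csub b z2) < d / K).
  { replace (d / K) with (d/(2*K) + d/(2*K)) by (field; lra). lra. }
  apply (Rmult_lt_compat_l K) in H2; auto.
  replace (K * (d / K)) with d in H2 by (field; lra). lra.
Qed.

Lemma cont3_comp3 : forall (f : C -> C -> C -> C) (L1 L2 : C -> C) K t z1 z2,
  0 < K ->
  (forall a, Cabs (Csub (L1 a) (L1 z1)) <= K * Cabs (Csub a z1)) ->
  (forall a, Cabs (Csub (L2 a) (L2 z2)) <= K * Cabs (Csub a z2)) ->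
  cont3 f t (L1 z1) (L2 z2) -> cont3 (fun t z1 z2 => f t (L1 z1) (L2 z2)) t z1 z2.
Proof.
  intros f L1 L2 K t z1 z2 HK H1 H2 Hf e He.
  destruct (Hf e He) as [d [Hd H]].
  exists (Rmin d (d / K)); split.
  apply Rmin_pos; auto. apply Rdiv_lt_0_compat; lra.
  min_facts d (d / K). intros t' a b A B Cc. apply H. lra.
  eapply Rle_lt_trans. apply H1.
  assert (B' : Cabs (Csub a z1) < d / K) by lra.
  apply (Rmult_lt_compat_l K) in B'; auto.
  replace (K * (d / K)) with d in B' by (field; lra). lra.
  eapply Rle_lt_trans. apply H2.
  assert (B' : Cabs (Csub b z2) < d / K) by lra.
  apply (Rmult_lt_compat_l K) in B'; auto.
  replace (K * (d / K)) with d in B' by (field; lra). lra.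
Qed.

Lemma Cdiff_ext : forall f g z, (forall u, f u = g u) -> Cdifferentiable f z -> Cdifferentiable g z.
Proof.
  intros f g z H Hf. replace g with f; auto. apply functional_extensionality; auto.
Qed.

Lemma Cdiff_const : forall c z, Cdifferentiable (fun _ => c) z.
Proof.
  intros c z. exists C0. intros e He. exists 1; split; [lra|]. intros h _ _.
  replace (Csub (Cdiv (Csub c c) h) C0) with C0 by (unfold Cdiv; ring).
  rewrite Cabs_C0; auto.
Qed.

Lemma Cdiff_add : forall f g z, Cdifferentiable f z -> Cdifferentiable g z ->
  Cdifferentiable (fun u => Cadd (f u) (g u)) z.
Proof.
  intros f g z [Lf Hf] [Lg Hg]. exists (Cadd Lf Lg). intros e He.
  destruct (add_lemma Lf Lg e He) as [d [Hd H]].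
  destruct (Hf d Hd) as [d1 [Hd1 H1]]. destruct (Hg d Hd) as [d2 [Hd2 H2]].
  exists (Rmin d1 d2); split. apply Rmin_pos; auto.
  min_facts d1 d2. intros h A B.
  replace (Cdiv (Csub (Cadd (f (Cadd z h)) (g (Cadd z h))) (Cadd (f z) (g z))) h)
    with (Cadd (Cdiv (Csub (f (Cadd z h)) (f z)) h) (Cdiv (Csub (g (Cadd z h)) (g z)) h))
    by (unfold Cdiv; ring).
  apply H. apply H1; lra. apply H2; lra.
Qed.

Lemma Cdiff_cont : forall f z, Cdifferentiable f z ->
  forall e, 0 < e -> exists d, 0 < d /\ forall h, Cabs h < d ->
    Cabs (Csub (f (Cadd z h)) (f z)) < e.
Proof.
  intros f z [L HL] e He.
  destruct (HL 1 Rlt_0_1) as [d [Hd H]].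
  pose proof (Cabs_nonneg L).
  exists (Rmin d (e / (Cabs L + 1))); split.
  apply Rmin_pos; auto. apply Rdiv_lt_0_compat; lra.
  min_facts d (e / (Cabs L + 1)). intros h Hh.
  destruct (Req_dec (Cabs h) 0) as [E|E].
  - apply Cabs_eq0 in E; subst. replace (Csub (f (Cadd z C0)) (f z)) with C0.
    rewrite Cabs_C0; auto. replace (Cadd z C0) with z by ring. ring.
  - assert (Hh0 : 0 < Cabs h) by (pose proof (Cabs_nonneg h); lra).
    assert (hnz : h <> C0) by (intro; subst; rewrite Cabs_C0 in Hh0; lra).
    specialize (H h Hh0 ltac:(lra)).
    replace (Csub (f (Cadd z h)) (f z)) with
      (Cmul h (Cadd (Csub (Cdiv (Csub (f (Cadd z h)) (f z)) h) L) L)) by (field; auto).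
    rewrite Cabs_mul. eapply Rle_lt_trans.
    apply Rmult_le_compat_l. apply Cabs_nonneg. apply Cabs_add.
    assert (Q1 : Cabs h * (Cabs (Csub (Cdiv (Csub (f (Cadd z h)) (f z)) h) L) + Cabs L)
            <= Cabs h * (1 + Cabs L)) by (apply Rmult_le_compat_l; lra).
    assert (Q2 : Cabs h * (1 + Cabs L) < e / (Cabs L + 1) * (1 + Cabs L)) by
      (apply Rmult_lt_compat_r; lra).
    replace (e / (Cabs L + 1) * (1 + Cabs L)) with e in Q2 by (field; lra). lra.
Qed.

Lemma Cdiff_mul : forall f g z, Cdifferentiable f z -> Cdifferentiable g z ->
  Cdifferentiable (fun u => Cmul (f u) (g u)) z.
Proof.
  intros f g z Df Dg. pose proof (Cdiff_cont f z Df) as Cf.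
  destruct Df as [Lf Hf]; destruct Dg as [Lg Hg].
  exists (Cadd (Cmul (f z) Lg) (Cmul (g z) Lf)). intros e He.
  destruct (add_lemma (Cmul (f z) Lg) (Cmul (g z) Lf) e He) as [d [Hd H]].
  destruct (mul_lemma (f z) Lg d Hd) as [d1 [Hd1 H1]].
  destruct (mul_lemma (g z) Lf d Hd) as [d2 [Hd2 H2]].
  destruct (Cf d1 Hd1) as [d3 [Hd3 H3]].
  destruct (Hg d1 Hd1) as [d4 [Hd4 H4]].
  destruct (Hf d2 Hd2) as [d5 [Hd5 H5]].
  exists (Rmin d3 (Rmin d4 d5)); split. apply min3_pos; auto.
  min_facts d3 (Rmin d4 d5). min_facts d4 d5. intros h A B.
  assert (hnz : h <> C0) by (intro; subst; rewrite Cabs_C0 in A; lra).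
  replace (Cdiv (Csub (Cmul (f (Cadd z h)) (g (Cadd z h))) (Cmul (f z) (g z))) h) with
    (Cadd (Cmul (f (Cadd z h)) (Cdiv (Csub (g (Cadd z h)) (g z)) h))
          (Cmul (g z) (Cdiv (Csub (f (Cadd z h)) (f z)) h))) by (unfold Cdiv; ring).
  apply H.
  - apply H1. apply H3; lra. apply H4; lra.
  - apply H2. replace (Csub (g z) (g z)) with C0 by ring. rewrite Cabs_C0; lra.
    apply H5; lra.
Qed.

Lemma Cdiff_affine : forall g a b z, a <> C0 ->
  Cdifferentiable g (Cadd (Cmul a z) b) ->
  Cdifferentiable (fun u => g (Cadd (Cmul a u) b)) z.
Proof.
  intros g a b z Ha [L HL]. exists (Cmul a L). intros e He.
  pose proof (Cabs_pos a Ha) as Pa.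
  destruct (HL (e / Cabs a)) as [d [Hd H]]. apply Rdiv_lt_0_compat; lra.
  exists (d / Cabs a); split. apply Rdiv_lt_0_compat; lra.
  intros h A B.
  assert (hnz : h <> C0) by (intro; subst; rewrite Cabs_C0 in A; lra).
  assert (Cabs (Cmul a h) < d).
  { rewrite Cabs_mul. apply (Rmult_lt_compat_l (Cabs a)) in B; auto.
    replace (Cabs a * (d / Cabs a)) with d in B by (field; lra). lra. }
  assert (0 < Cabs (Cmul a h)) by (rewrite Cabs_mul; apply Rmult_lt_0_compat; lra).
  specialize (H (Cmul a h) H1 H0).
  replace (Cadd (Cadd (Cmul a z) b) (Cmul a h)) with (Cadd (Cmul a (Cadd z h)) b) in H by ring.
  replace (Csub (Cdiv (Csub (g (Cadd (Cmul a (Cadd z h)) b)) (g (Cadd (Cmul a z) b))) h) (Cmul a L))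
    with (Cmul a (Csub (Cdiv (Csub (g (Cadd (Cmul a (Cadd z h)) b)) (g (Cadd (Cmul a z) b))) (Cmul a h)) L))
    by (field; auto).
  rewrite Cabs_mul. apply (Rmult_lt_compat_l (Cabs a)) in H; auto.
  replace (Cabs a * (e / Cabs a)) with e in H by (field; lra). auto.
Qed.

Lemma holo3_binop : forall (op : C -> C -> C) f g,
  (forall a0 b0 e, 0 < e -> exists d, 0 < d /\ forall a b,
     Cabs (Csub a a0) < d -> Cabs (Csub b b0) < d -> Cabs (Csub (op a b) (op a0 b0)) < e) ->
  (forall F G z, Cdifferentiable F z -> Cdifferentiable G z ->
     Cdifferentiable (fun u => op (F u) (G u)) z) ->
  holo3 f -> holo3 g -> holo3 (fun t z1 z2 => op (f t z1 z2) (g t z1 z2)).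
Proof.
  intros op f g Hop Hd Hf Hg. apply holo3_iff. intros t z1 z2 Ht.
  destruct (proj1 (holo3_iff f) Hf t z1 z2 Ht) as [A [B [Cc D]]].
  destruct (proj1 (holo3_iff g) Hg t z1 z2 Ht) as [A' [B' [C' D']]].
  split. apply cont3_binop; auto.
  split. apply (Hd (fun u => f u z1 z2) (fun u => g u z1 z2)); auto.
  split. apply (Hd (fun u => f t u z2) (fun u => g t u z2)); auto.
  apply (Hd (fun u => f t z1 u) (fun u => g t z1 u)); auto.
Qed.

Lemma holo3_add : forall f g, holo3 f -> holo3 g ->
  holo3 (fun t z1 z2 => Cadd (f t z1 z2) (g t z1 z2)).
Proof. intros; apply holo3_binop; auto. apply add_lemma. apply Cdiff_add. Qed.
Lemma holo3_mul : forall f g, holo3 f -> holo3 g ->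
  holo3 (fun t z1 z2 => Cmul (f t z1 z2) (g t z1 z2)).
Proof. intros; apply holo3_binop; auto. apply mul_lemma. apply Cdiff_mul. Qed.
Lemma holo3_const : forall c, holo3 (fun _ _ _ => c).
Proof.
  intros c. apply holo3_iff. intros. split. apply cont3_const.
  split. apply Cdiff_const. split; apply Cdiff_const.
Qed.
Lemma holo3_lin : forall a f g, holo3 f -> holo3 g -> holo3 (lin3 a f g).
Proof.
  intros a f g Hf Hg. unfold lin3.
  apply (holo3_add (fun t z1 z2 => Cmul a (f t z1 z2))); auto.
  apply (holo3_mul (fun _ _ _ => a)); auto. apply holo3_const.
Qed.
Lemma holo3_Csum : forall {A} (F : A -> C -> C -> C -> C) l,
  (forall e, In e l -> holo3 (F e)) ->
  holo3 (fun t z1 z2 => Csum (fun e => F e t z1 z2) l).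
Proof.
  intros A F l; induction l as [|e l IH]; intros H; simpl.
  apply holo3_const.
  apply (holo3_add (F e) (fun t z1 z2 => Csum (fun e => F e t z1 z2) l)).
  apply H; simpl; auto. apply IH; intros; apply H; simpl; auto.
Qed.

Lemma Cconj_nz : forall z, z <> C0 -> Cconj z <> C0.
Proof.
  intros z H E; apply H. replace z with (Cconj (Cconj z)) by ceq. rewrite E; ceq.
Qed.

Lemma Cabs_lip : forall a x y, Cabs (Csub (Cmul a x) (Cmul a y)) <= (Cabs a + 1) * Cabs (Csub x y).
Proof.
  intros. replace (Csub (Cmul a x) (Cmul a y)) with (Cmul a (Csub x y)) by ring.
  rewrite Cabs_mul. apply Rmult_le_compat_r. apply Cabs_nonneg. lra.
Qed.

Lemma holo3_slashI : forall k eta f, eta <> C0 -> holo3 f -> holo3 (slashI k eta f).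
Proof.
  intros k eta f Heta Hf. unfold slashI.
  apply (holo3_mul (fun _ _ _ => Cinv (Cpow eta k))
     (fun t z1 z2 => f t (Cmul eta z1) (Cmul (Cconj eta) z2))).
  apply holo3_const.
  pose proof (Cconj_nz eta Heta) as Hc.
  apply holo3_iff. intros t z1 z2 Ht.
  destruct (proj1 (holo3_iff f) Hf t (Cmul eta z1) (Cmul (Cconj eta) z2) Ht) as [A [B [Cc D]]].
  split.
  - apply (cont3_comp3 f (Cmul eta) (Cmul (Cconj eta)) (Cabs eta + Cabs (Cconj eta) + 1)).
    pose proof (Cabs_nonneg eta); pose proof (Cabs_nonneg (Cconj eta)); lra.
    intros a; eapply Rle_trans. apply Cabs_lip. apply Rmult_le_compat_r. apply Cabs_nonneg.
    pose proof (Cabs_nonneg (Cconj eta)); lra.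
    intros a; eapply Rle_trans. apply Cabs_lip. apply Rmult_le_compat_r. apply Cabs_nonneg.
    pose proof (Cabs_nonneg eta); lra.
    auto.
  - split; auto. split.
    + apply (Cdiff_ext (fun u => f t (Cadd (Cmul eta u) C0) (Cmul (Cconj eta) z2))).
      intros; f_equal; ring.
      apply (Cdiff_affine (fun v => f t v (Cmul (Cconj eta) z2))); auto.
      replace (Cadd (Cmul eta z1) C0) with (Cmul eta z1) by ring; auto.
    + apply (Cdiff_ext (fun u => f t (Cmul eta z1) (Cadd (Cmul (Cconj eta) u) C0))).
      intros; f_equal; ring.
      apply (Cdiff_affine (fun v => f t (Cmul eta z1) v)); auto.
      replace (Cadd (Cmul (Cconj eta) z2) C0) with (Cmul (Cconj eta) z2) by ring; auto.
Qed.

Lemma holo3_prod : forall (p1 p2 : C -> C -> C) al be, al <> C0 -> be <> C0 ->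
  holo2 p1 -> holo2 p2 ->
  holo3 (fun t w1 w2 => Cmul (p1 t (Cmul al (Cadd w1 w2))) (p2 t (Cmul be (Csub w1 w2)))).
Proof.
  intros p1 p2 al be Hal Hbe H1 H2.
  apply (holo3_mul (fun t w1 w2 => p1 t (Cmul al (Cadd w1 w2)))
                   (fun t w1 w2 => p2 t (Cmul be (Csub w1 w2)))).
  - apply holo3_iff. intros t z1 z2 Ht. destruct (H1 t (Cmul al (Cadd z1 z2)) Ht) as [A [B Cc]].
    split.
    + apply (cont3_comp2 p1 (fun a b => Cmul al (Cadd a b)) (Cabs al + 1)).
      pose proof (Cabs_nonneg al); lra.
      intros a b. replace (Csub (Cmul al (Cadd a b)) (Cmul al (Cadd z1 z2))) with
        (Cmul al (Cadd (Csub a z1) (Csub b z2))) by ring.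
      rewrite Cabs_mul. apply Rmult_le_compat. apply Cabs_nonneg. apply Cabs_nonneg. lra.
      apply Cabs_add.
      auto.
    + split; auto. split.
      * apply (Cdiff_ext (fun u => p1 t (Cadd (Cmul al u) (Cmul al z2)))).
        intros; f_equal; ring.
        apply (Cdiff_affine (fun v => p1 t v)); auto.
        replace (Cadd (Cmul al z1) (Cmul al z2)) with (Cmul al (Cadd z1 z2)) by ring; auto.
      * apply (Cdiff_ext (fun u => p1 t (Cadd (Cmul al u) (Cmul al z1)))).
        intros; f_equal; ring.
        apply (Cdiff_affine (fun v => p1 t v)); auto.
        replace (Cadd (Cmul al z2) (Cmul al z1)) with (Cmul al (Cadd z1 z2)) by ring; auto.
  - apply holo3_iff. intros t z1 z2 Ht. destruct (H2 t (Cmul be (Csub z1 z2)) Ht) as [A [B Cc]].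
    split.
    + apply (cont3_comp2 p2 (fun a b => Cmul be (Csub a b)) (Cabs be + 1)).
      pose proof (Cabs_nonneg be); lra.
      intros a b. replace (Csub (Cmul be (Csub a b)) (Cmul be (Csub z1 z2))) with
        (Cmul be (Cadd (Csub a z1) (Copp (Csub b z2)))) by ring.
      rewrite Cabs_mul. apply Rmult_le_compat. apply Cabs_nonneg. apply Cabs_nonneg. lra.
      eapply Rle_trans. apply Cabs_add. rewrite Cabs_opp. lra.
      auto.
    + split; auto. split.
      * apply (Cdiff_ext (fun u => p2 t (Cadd (Cmul be u) (Copp (Cmul be z2))))).
        intros; f_equal; ring.
        apply (Cdiff_affine (fun v => p2 t v)); auto.
        replace (Cadd (Cmul be z1) (Copp (Cmul be z2))) with (Cmul be (Csub z1 z2)) by ring; auto.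
      * apply (Cdiff_ext (fun u => p2 t (Cadd (Cmul (Copp be) u) (Cmul be z1)))).
        intros; f_equal; ring.
        apply (Cdiff_affine (fun v => p2 t v)); auto.
        intro E; apply Hbe. replace be with (Copp (Copp be)) by ring. rewrite E; ring.
        replace (Cadd (Cmul (Copp be) z2) (Cmul be z1)) with (Cmul be (Csub z1 z2)) by ring; auto.
Qed.

Lemma Csum_app : forall {A} (f : A -> C) l1 l2, Csum f (l1 ++ l2) = Cadd (Csum f l1) (Csum f l2).
Proof. intros A f l1 l2; induction l1; simpl. ring. rewrite IHl1; ring. Qed.
Lemma Rsum_app : forall {A} (f : A -> R) l1 l2, Rsum f (l1 ++ l2) = Rsum f l1 + Rsum f l2.
Proof. intros A f l1 l2; induction l1; simpl. ring. rewrite IHl1; ring. Qed.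
Lemma Csum_ext : forall {A} (f g : A -> C) l, (forall x, In x l -> f x = g x) -> Csum f l = Csum g l.
Proof. intros A f g l; induction l; simpl; intros H; auto. rewrite H, IHl; auto. Qed.
Lemma Rsum_ext : forall {A} (f g : A -> R) l, (forall x, In x l -> f x = g x) -> Rsum f l = Rsum g l.
Proof. intros A f g l; induction l; simpl; intros H; auto. rewrite H, IHl; auto. Qed.
Lemma Rsum_le : forall {A} (f g : A -> R) l, (forall x, In x l -> f x <= g x) -> Rsum f l <= Rsum g l.
Proof. intros A f g l; induction l; simpl; intros H. lra. pose proof (H a (or_introl eq_refl)).
  assert (Rsum f l <= Rsum g l) by (apply IHl; auto). lra. Qed.
Lemma Rsum_nonneg : forall {A} (f : A -> R) l, (forall x, In x l -> 0 <= f x) -> 0 <= Rsum f l.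
Proof. intros A f l H. replace 0 with (Rsum (fun _ : A => 0) l). apply Rsum_le; auto.
  clear H; induction l; simpl; auto; lra. Qed.
Lemma Csum_lin : forall {A} (a : C) (f g : A -> C) l,
  Csum (fun x => Cadd (Cmul a (f x)) (g x)) l = Cadd (Cmul a (Csum f l)) (Csum g l).
Proof. intros A a f g l; induction l; simpl. ring. rewrite IHl; ring. Qed.
Lemma Csum_scal : forall {A} (a : C) (f : A -> C) l,
  Csum (fun x => Cmul a (f x)) l = Cmul a (Csum f l).
Proof. intros A a f l; induction l; simpl. ring. rewrite IHl; ring. Qed.
Lemma Csum_add : forall {A} (f g : A -> C) l,
  Csum (fun x => Cadd (f x) (g x)) l = Cadd (Csum f l) (Csum g l).
Proof. intros A f g l; induction l; simpl. ring. rewrite IHl; ring. Qed.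
Lemma Csum_zero : forall {A} (l : list A), Csum (fun _ => C0) l = C0.
Proof. intros A l; induction l; simpl; auto. rewrite IHl; ring. Qed.
Lemma Rsum_lin : forall {A} (a : R) (f g : A -> R) l,
  Rsum (fun x => a * f x + g x) l = a * Rsum f l + Rsum g l.
Proof. intros A a f g l; induction l; simpl. ring. rewrite IHl; ring. Qed.
Lemma Rsum_add2 : forall {A} (f g : A -> R) l,
  Rsum (fun x => f x + g x) l = Rsum f l + Rsum g l.
Proof. intros A f g l; induction l; simpl. ring. rewrite IHl; ring. Qed.
Lemma Rsum_scal : forall {A} (a : R) (f : A -> R) l,
  Rsum (fun x => a * f x) l = a * Rsum f l.
Proof. intros A a f l; induction l; simpl. ring. rewrite IHl; ring. Qed.
Lemma Cabs_Csum : forall {A} (f : A -> C) l, Cabs (Csum f l) <= Rsum (fun x => Cabs (f x)) l.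
Proof. intros A f l; induction l; simpl. rewrite Cabs_C0; lra.
  eapply Rle_trans. apply Cabs_add. lra. Qed.
Lemma Csum_swap : forall {A B} (f : A -> B -> C) l1 l2,
  Csum (fun x => Csum (fun y => f x y) l2) l1 = Csum (fun y => Csum (fun x => f x y) l1) l2.
Proof.
  intros A B f l1 l2; induction l1; simpl. rewrite Csum_zero; auto.
  rewrite IHl1. rewrite <- Csum_add. auto.
Qed.
Lemma Rsum_Re : forall {A} (f : A -> R) l, Rsum f l = Re (Csum (fun x => RtoC (f x)) l).
Proof. intros A f l; induction l; simpl; auto. rewrite IHl; auto. Qed.

Lemma seq_S_end : forall N, seq 0 (S N) = seq 0 N ++ (N :: nil).
Proof. intros N. rewrite seq_S. auto. Qed.
Lemma Csum_seqS : forall f N, Csum f (seq 0 (S N)) = Cadd (Csum f (seq 0 N)) (f N).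
Proof. intros. rewrite seq_S_end, Csum_app; simpl; ring. Qed.
Lemma Rsum_seqS : forall f N, Rsum f (seq 0 (S N)) = Rsum f (seq 0 N) + f N.
Proof. intros. rewrite seq_S_end, Rsum_app; simpl; ring. Qed.

Definition Ccv' (u : nat -> C) (l : C) := forall e, 0 < e -> exists N, forall n, (n >= N)%nat ->
  Cabs (Csub (u n) l) < e.

Lemma Ccv_iff : forall u l, Ccv u l <-> Ccv' u l.
Proof.
  intros u l; split.
  - intros [H1 H2] e He. destruct (H1 (e/2)) as [N1 HN1]; [lra|].
    destruct (H2 (e/2)) as [N2 HN2]; [lra|].
    exists (max N1 N2). intros n Hn. eapply Rle_lt_trans. apply Cabs_le_ReIm.
    specialize (HN1 n ltac:(lia)); specialize (HN2 n ltac:(lia)). unfold R_dist in *.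
    simpl. unfold Rminus in *. lra.
  - intros H; split; intros e He; destruct (H e He) as [N HN]; exists N; intros n Hn;
    specialize (HN n Hn); unfold R_dist.
    + eapply Rle_lt_trans; [|exact HN]. pose proof (Re_le (Csub (u n) l)). simpl in H0.
      unfold Rminus; auto.
    + eapply Rle_lt_trans; [|exact HN]. pose proof (Im_le (Csub (u n) l)). simpl in H0.
      unfold Rminus; auto.
Qed.

Lemma Ccv_lin : forall a u v lu lv, Ccv u lu -> Ccv v lv ->
  Ccv (fun n => Cadd (Cmul a (u n)) (v n)) (Cadd (Cmul a lu) lv).
Proof.
  intros a u v lu lv Hu Hv. apply Ccv_iff in Hu; apply Ccv_iff in Hv; apply Ccv_iff.
  intros e He.
  destruct (add_lemma (Cmul a lu) lv e He) as [d [Hd H]].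
  destruct (mul_lemma a lu d Hd) as [d1 [Hd1 H1]].
  destruct (Hu d1 Hd1) as [N1 HN1]. destruct (Hv d Hd) as [N2 HN2].
  exists (max N1 N2); intros n Hn. apply H. apply H1.
  replace (Csub a a) with C0 by ring; rewrite Cabs_C0; auto. apply HN1; lia. apply HN2; lia.
Qed.

Lemma Ccv_const : forall c, Ccv (fun _ => c) c.
Proof. intros c; apply Ccv_iff; intros e He; exists O; intros.
  replace (Csub c c) with C0 by ring; rewrite Cabs_C0; auto. Qed.

Lemma Ccv_ext : forall u v l, (forall n, u n = v n) -> Ccv u l -> Ccv v l.
Proof. intros u v l H Hu. replace v with u; auto. apply functional_extensionality; auto. Qed.

Definition ps (a : nat -> C) (N : nat) := Csum a (seq 0 (S N)).
Definition rps (a : nat -> R) (N : nat) := Rsum a (seq 0 (S N)).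

Lemma conv_rewrite : forall a b N,
  ps (fun n => Csum (fun j => Cmul (a j) (b (n - j)%nat)) (seq 0 (S n))) N
  = Csum (fun j => Cmul (a j) (ps b (N - j))) (seq 0 (S N)).
Proof.
  intros a b N; unfold ps; induction N.
  - simpl. ring.
  - rewrite Csum_seqS, IHN. rewrite (Csum_seqS (fun j => Cmul (a j) (Csum b (seq 0 (S (S N - j)))))).
    rewrite (Csum_seqS (fun j => Cmul (a j) (b (S N - j)%nat)) (S N)).
    rewrite (Csum_ext (fun j => Cmul (a j) (Csum b (seq 0 (S (S N - j)))))
       (fun j => Cadd (Cmul (a j) (Csum b (seq 0 (S (N - j))))) (Cmul (a j) (b (S N - j)%nat)))).
    rewrite Csum_add. replace (S N - S N)%nat with O by lia. simpl. ring.
    intros j Hj. apply in_seq in Hj. replace (S N - j)%nat with (S (N - j)) by lia.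
    rewrite Csum_seqS. ring.
Qed.

Lemma rps_tail : forall (a : nat -> R) L N, (L <= N)%nat ->
  Rsum (fun j => if (L <? j)%nat then a j else 0) (seq 0 (S N)) = rps a N - rps a L.
Proof.
  intros a L N HLN; unfold rps. induction HLN.
  - rewrite (Rsum_ext _ (fun _ => 0)). clear. induction (seq 0 (S L)); simpl; lra.
    intros j Hj; apply in_seq in Hj. destruct (Nat.ltb_spec L j); lia || auto.
  - rewrite Rsum_seqS, IHHLN, (Rsum_seqS a (S m)).
    destruct (Nat.ltb_spec L (S m)); try lia. ring.
Qed.

Lemma bounded_cv : forall (u : nat -> C) l, Ccv' u l -> exists D, 0 <= D /\ forall k, Cabs (Csub (u k) l) <= D.
Proof.
  intros u l H. destruct (H 1 Rlt_0_1) as [K HK].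
  exists (Rsum (fun k => Cabs (Csub (u k) l)) (seq 0 (S K)) + 1). split.
  pose proof (Rsum_nonneg (fun k => Cabs (Csub (u k) l)) (seq 0 (S K)) (fun x _ => Cabs_nonneg _)); lra.
  intros k. destruct (le_lt_dec K k).
  - specialize (HK k l0). pose proof (Rsum_nonneg (fun k => Cabs (Csub (u k) l)) (seq 0 (S K)) (fun x _ => Cabs_nonneg _)); lra.
  - assert (In k (seq 0 (S K))) by (apply in_seq; lia).
    assert (forall l' (f : nat -> R), (forall x, In x l' -> 0 <= f x) -> In k l' -> f k <= Rsum f l').
    { induction l'; simpl; intros f Hf Hin. contradiction. destruct Hin.
      subst. pose proof (Rsum_nonneg f l' (fun x H => Hf x (or_intror H))); lra.
      pose proof (Hf a (or_introl eq_refl)). pose proof (IHl' f (fun x H => Hf x (or_intror H)) H1). lra. }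
    pose proof (H1 (seq 0 (S K)) (fun k => Cabs (Csub (u k) l)) (fun x _ => Cabs_nonneg _) H0). lra.
Qed.

Lemma cauchy_prod : forall a b A B Ma,
  Ccv (ps a) A -> Ccv (ps b) B ->
  (forall N, rps (fun j => Cabs (a j)) N <= Ma) ->
  Ccv (ps (fun n => Csum (fun j => Cmul (a j) (b (n - j)%nat)) (seq 0 (S n)))) (Cmul A B).
Proof.
  intros a b A B Ma HA HB HM. apply Ccv_iff in HA; apply Ccv_iff in HB; apply Ccv_iff.
  set (T := rps (fun j => Cabs (a j))).
  assert (Tinc : Un_growing T).
  { intros n. unfold T, rps. rewrite (Rsum_seqS _ (S n)). pose proof (Cabs_nonneg (a (S n))). lra. }
  destruct (growing_cv T Tinc) as [lT HlT].
  { exists Ma. intros x [n ->]. apply HM. }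
  destruct (bounded_cv _ _ HB) as [D [HD0 HD]].
  assert (HMa0 : 0 <= Ma).
  { specialize (HM O). unfold rps in HM. simpl in HM. pose proof (Cabs_nonneg (a O)). lra. }
  intros e He.
  set (e' := e / (2 * (Ma + D + 2))).
  assert (He' : 0 < e') by (apply Rdiv_lt_0_compat; lra).
  destruct (HlT (e'/2)) as [L HL]. lra.
  destruct (HB e' He') as [K HK].
  destruct (mul_lemma A B (e/2)) as [d [Hd Hmul]]. lra.
  destruct (HA d Hd) as [N0 HN0].
  exists (max N0 (L + K)). intros N HN.
  rewrite conv_rewrite.
  replace (Csub (Csum (fun j => Cmul (a j) (ps b (N - j))) (seq 0 (S N))) (Cmul A B)) with
    (Cadd (Csum (fun j => Cmul (a j) (Csub (ps b (N - j)) B)) (seq 0 (S N)))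
          (Csub (Cmul (ps a N) B) (Cmul A B))).
  2:{ unfold ps at 2. rewrite <- (Csum_ext (fun j => Cadd (Cmul (a j) (ps b (N - j))) (Cmul (Copp B) (a j)))).
      rewrite Csum_add, Csum_scal. ring. intros; ring. }
  eapply Rle_lt_trans. apply Cabs_add.
  assert (P2 : Cabs (Csub (Cmul (ps a N) B) (Cmul A B)) < e / 2).
  { apply Hmul. apply HN0; lia. replace (Csub B B) with C0 by ring; rewrite Cabs_C0; auto. }
  assert (P1 : Cabs (Csum (fun j => Cmul (a j) (Csub (ps b (N - j)) B)) (seq 0 (S N))) <= e / 2).
  { eapply Rle_trans. apply Cabs_Csum.
    eapply Rle_trans. apply (Rsum_le _ (fun j => e' * Cabs (a j) + D * (if (L <? j)%nat then Cabs (a j) else 0))).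
    - intros j Hj. apply in_seq in Hj. rewrite Cabs_mul.
      destruct (Nat.ltb_spec L j).
      + pose proof (HD (N - j)%nat). pose proof (Cabs_nonneg (a j)).
        pose proof (Cabs_nonneg (Csub (ps b (N - j)) B)). nra.
      + assert (Cabs (Csub (ps b (N - j)) B) < e') by (apply HK; lia).
        pose proof (Cabs_nonneg (a j)). nra.
    - rewrite Rsum_add2, !Rsum_scal. rewrite rps_tail by lia.
      fold (rps (fun j => Cabs (a j)) N). fold T.
      pose proof (HM N). fold T in H.
      assert (T N - T L <= e').
      { pose proof (HL N ltac:(lia)); pose proof (HL L ltac:(lia)). unfold R_dist in *.
        apply Rabs_def2 in H0; apply Rabs_def2 in H1. lra. }
      assert (e' * T N <= e' * Ma) by (apply Rmult_le_compat_l; lra).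
      assert (D * (T N - T L) <= D * e') by (apply Rmult_le_compat_l; lra).
      assert (e' * (Ma + D) <= e / 2).
      { unfold e'. apply (Rmult_le_reg_r (2 * (Ma + D + 2))). lra.
        field_simplify; [|lra]. nra. }
      lra. }
  lra.
Qed.

Lemma Csum_perm : forall {A} (f : A -> C) l l', Permutation l l' -> Csum f l = Csum f l'.
Proof. intros A f l l' H; induction H; simpl; auto. rewrite IHPermutation; auto. ring.
  rewrite IHPermutation1; auto. Qed.
Lemma Rsum_perm : forall {A} (f : A -> R) l l', Permutation l l' -> Rsum f l = Rsum f l'.
Proof. intros A f l l' H; induction H; simpl; auto. rewrite IHPermutation; auto. ring.
  rewrite IHPermutation1; auto. Qed.
Lemma Csum_map : forall {A B} (f : B -> C) (g : A -> B) l, Csum f (map g l) = Csum (fun x => f (g x)) l.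
Proof. intros; induction l; simpl; auto. rewrite IHl; auto. Qed.
Lemma Rsum_map : forall {A B} (f : B -> R) (g : A -> B) l, Rsum f (map g l) = Rsum (fun x => f (g x)) l.
Proof. intros; induction l; simpl; auto. rewrite IHl; auto. Qed.
Lemma Csum_filter : forall {A} (p : A -> bool) (f : A -> C) l,
  Csum (fun x => if p x then f x else C0) l = Csum f (filter p l).
Proof. intros; induction l; simpl; auto. destruct (p a); simpl; rewrite IHl; auto. ring. Qed.
Lemma Csum_prod : forall {A B} (g : A -> C) (h : B -> C) l1 l2,
  Csum (fun xy => Cmul (g (fst xy)) (h (snd xy))) (list_prod l1 l2) = Cmul (Csum g l1) (Csum h l2).
Proof.
  intros; induction l1; simpl; auto. ring.
  rewrite Csum_app, IHl1, Csum_map. simpl. rewrite Csum_scal. ring.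
Qed.

Lemma In_zrange : forall B x, In x (zrange B) <-> (- Z.of_nat B <= x <= Z.of_nat B)%Z.
Proof.
  intros B x; unfold zrange; rewrite in_map_iff; split.
  - intros [k [<- Hk]]. apply in_seq in Hk. lia.
  - intros H. exists (Z.to_nat (x + Z.of_nat B)). split. lia. apply in_seq. lia.
Qed.
Lemma NoDup_zrange : forall B, NoDup (zrange B).
Proof.
  intros B. unfold zrange. apply FinFun.Injective_map_NoDup. intros a b H; lia. apply seq_NoDup.
Qed.

Lemma In_K_range : forall m n x y, In (x, y) (K_range m n) <->
  (x * x + y * y <= 4 * Z.of_nat n * Z.of_nat m)%Z.
Proof.
  intros m n x y; unfold K_range. rewrite filter_In, in_prod_iff, !In_zrange. cbn [fst snd].
  rewrite Z.leb_le. split. tauto. intros H.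
  assert (Bd : forall u N, (0 <= N)%Z -> (u * u <= 4 * N)%Z -> (- (2 * N + 1) <= u <= 2 * N + 1)%Z) by (intros; nia).
  replace (Z.of_nat (2 * n * m + 1)) with (2 * (Z.of_nat n * Z.of_nat m) + 1)%Z by lia.
  assert (0 <= Z.of_nat n * Z.of_nat m)%Z by lia.
  split; auto. split; apply Bd; nia.
Qed.
Lemma NoDup_list_prod : forall {A B} (l1 : list A) (l2 : list B), NoDup l1 -> NoDup l2 ->
  NoDup (list_prod l1 l2).
Proof.
  intros A B l1 l2 H1 H2; induction H1; simpl. constructor.
  apply NoDup_app; auto.
  apply FinFun.Injective_map_NoDup; auto. intros a b E; inversion E; auto.
  intros [a b] Ha Hb. apply in_map_iff in Ha. destruct Ha as [y [E _]]. inversion E; subst.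
  apply in_prod_iff in Hb. tauto.
Qed.
Lemma NoDup_K_range : forall m n, NoDup (K_range m n).
Proof. intros. unfold K_range. apply NoDup_filter. apply NoDup_list_prod; apply NoDup_zrange. Qed.

Lemma In_cl_range : forall m n x, In x (cl_range m n) <-> (x * x <= 4 * Z.of_nat n * Z.of_nat m)%Z.
Proof.
  intros m n x; unfold cl_range. rewrite filter_In, In_zrange, Z.leb_le. split. tauto.
  intros H; split; auto.
  assert (Bd : forall u N, (0 <= N)%Z -> (u * u <= 4 * N)%Z -> (- (2 * N + 1) <= u <= 2 * N + 1)%Z) by (intros; nia).
  replace (Z.of_nat (2 * n * m + 1)) with (2 * (Z.of_nat n * Z.of_nat m) + 1)%Z by lia.
  apply Bd; nia.
Qed.
Lemma NoDup_cl_range : forall m n, NoDup (cl_range m n).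
Proof. intros. unfold cl_range. apply NoDup_filter. apply NoDup_zrange. Qed.

Lemma K_range_rot : forall m n (rho rhoi : Z * Z -> Z * Z),
  (forall xy, rho (rhoi xy) = xy) -> (forall xy, rhoi (rho xy) = xy) ->
  (forall xy, fst (rho xy) * fst (rho xy) + snd (rho xy) * snd (rho xy) =
              fst xy * fst xy + snd xy * snd xy)%Z ->
  Permutation (map rho (K_range m n)) (K_range m n).
Proof.
  intros m n rho rhoi H1 H2 H3. apply NoDup_Permutation.
  - apply FinFun.Injective_map_NoDup. intros a b E. rewrite <- (H2 a), <- (H2 b), E; auto.
    apply NoDup_K_range.
  - apply NoDup_K_range.
  - intros [x y]. rewrite in_map_iff. split.
    + intros [[a b] [E Hin]]. apply In_K_range in Hin. apply In_K_range.
      pose proof (H3 (a, b)). rewrite E in H. simpl in *. lia.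
    + intros Hin. exists (rhoi (x, y)). split; auto. pose proof (H3 (rhoi (x, y))) as H.
      rewrite H1 in H. destruct (rhoi (x,y)) as [a b] eqn:Ea.
      apply In_K_range. apply In_K_range in Hin. simpl in *. lia.
Qed.

Definition indj (m n j : nat) (xy : Z * Z) : bool :=
  (Z.leb (fst xy * fst xy) (4 * Z.of_nat j * Z.of_nat m) &&
   Z.leb (snd xy * snd xy) (4 * Z.of_nat (n - j) * Z.of_nat m))%bool.

Lemma K_range_split : forall m n j, (j <= n)%nat ->
  Permutation (filter (indj m n j) (K_range m n)) (list_prod (cl_range m j) (cl_range m (n - j))).
Proof.
  intros m n j Hj. apply NoDup_Permutation.
  apply NoDup_filter, NoDup_K_range.
  apply NoDup_list_prod; apply NoDup_cl_range.
  intros [x y]. rewrite filter_In, in_prod_iff, In_K_range, !In_cl_range. unfold indj; cbn [fst snd].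
  rewrite Bool.andb_true_iff, !Z.leb_le. rewrite Nat2Z.inj_sub by lia. split. tauto.
  intros [A B]. split; auto. nia.
Qed.

Definition cuspc (m : nat) (c : nat -> Z * Z -> C) :=
  forall n xy, (fst xy * fst xy + snd xy * snd xy = 4 * Z.of_nat n * Z.of_nat m)%Z -> c n xy = C0.

Definition FK (b : bool) (m : nat) (f : C -> C -> C -> C) :=
  exists c, HasFourier_K m f c /\ (b = true -> cuspc m c).

Lemma FK_lin : forall b m a f g, FK b m f -> FK b m g -> FK b m (lin3 a f g).
Proof.
  intros b m a f g [cf [Hf Cf]] [cg [Hg Cg]].
  exists (fun n xy => Cadd (Cmul a (cf n xy)) (cg n xy)). split.
  - intros t z1 z2 Ht. destruct (Hf t z1 z2 Ht) as [Lf [Mf BMf]].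
    destruct (Hg t z1 z2 Ht) as [Lg [Mg BMg]]. split.
    + unfold lin3. eapply Ccv_ext; [|apply (Ccv_lin a _ _ _ _ Lf Lg)].
      intros N. cbv beta. rewrite <- Csum_lin. apply Csum_ext; intros n _.
      rewrite <- Csum_lin. apply Csum_ext; intros xy _. unfold K_term. ring.
    + exists (Cabs a * Mf + Mg). intros N.
      eapply Rle_trans.
      apply (Rsum_le _ (fun n => Cabs a * Rsum (fun xy => Cabs (K_term cf t z1 z2 n xy)) (K_range m n)
                               + Rsum (fun xy => Cabs (K_term cg t z1 z2 n xy)) (K_range m n))).
      intros n _. rewrite <- Rsum_lin. apply Rsum_le. intros xy _.
      unfold K_term. replace (Cmul (Cadd (Cmul a (cf n xy)) (cg n xy)) (ee (Cadd (Cadd (Cmul (NtoC n) t) (Cmul (rK xy) z1)) (Cmul (Cconj (rK xy)) z2))))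
        with (Cadd (Cmul a (Cmul (cf n xy) (ee (Cadd (Cadd (Cmul (NtoC n) t) (Cmul (rK xy) z1)) (Cmul (Cconj (rK xy)) z2)))))
                   (Cmul (cg n xy) (ee (Cadd (Cadd (Cmul (NtoC n) t) (Cmul (rK xy) z1)) (Cmul (Cconj (rK xy)) z2))))) by ring.
      eapply Rle_trans. apply Cabs_add. rewrite Cabs_mul. lra.
      rewrite Rsum_lin. specialize (BMf N); specialize (BMg N).
      pose proof (Cabs_nonneg a). nra.
  - intros Hb n xy E. rewrite Cf, Cg; auto. ring.
Qed.

Lemma FK_zero : forall b m, FK b m (fun _ _ _ => C0).
Proof.
  intros b m. exists (fun _ _ => C0). split.
  - intros t z1 z2 Ht. split.
    + eapply Ccv_ext; [|apply Ccv_const]. intros N. cbv beta.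
      rewrite (Csum_ext _ (fun _ => C0)). rewrite Csum_zero; auto.
      intros n _. rewrite (Csum_ext _ (fun _ => C0)). rewrite Csum_zero; auto.
      intros; unfold K_term; ring.
    + exists 0. intros N. rewrite (Rsum_ext _ (fun _ => 0)). clear; induction (seq 0 (S N)); simpl; lra.
      intros n _. rewrite (Rsum_ext _ (fun _ => 0)). clear; induction (K_range m n); simpl; lra.
      intros; unfold K_term. replace (Cmul C0 _) with C0 by ring. apply Cabs_C0.
  - intros _ n xy _; auto.
Qed.

Lemma FK_ext : forall b m f g, (forall t z1 z2, f t z1 z2 = g t z1 z2) -> FK b m f -> FK b m g.
Proof.
  intros b m f g H Hf. replace g with f; auto.
  apply functional_extensionality; intro t; apply functional_extensionality; intro z1;
  apply functional_extensionality; intro z2; auto.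
Qed.

Lemma FK_Csum : forall {A} b m (F : A -> C -> C -> C -> C) l,
  (forall e, In e l -> FK b m (F e)) ->
  FK b m (fun t z1 z2 => Csum (fun e => F e t z1 z2) l).
Proof.
  intros A b m F l; induction l as [|e l IH]; intros H; simpl.
  apply FK_zero.
  apply (FK_ext _ _ (lin3 C1 (F e) (fun t z1 z2 => Csum (fun e => F e t z1 z2) l))).
  intros; unfold lin3; ring.
  apply FK_lin. apply H; simpl; auto. apply IH; intros; apply H; simpl; auto.
Qed.

Lemma FK_rot : forall b m k eta (rho rhoi : Z * Z -> Z * Z) f,
  (forall xy, rho (rhoi xy) = xy) -> (forall xy, rhoi (rho xy) = xy) ->
  (forall xy, fst (rho xy) * fst (rho xy) + snd (rho xy) * snd (rho xy) =
              fst xy * fst xy + snd xy * snd xy)%Z ->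
  (forall xy, rK (rho xy) = Cmul (rK xy) eta) ->
  FK b m f -> FK b m (slashI k eta f).
Proof.
  intros b m k eta rho rhoi f H1 H2 H3 H4 [c [Hc Cc]].
  set (u := Cinv (Cpow eta k)).
  exists (fun n xy => Cmul u (c n (rhoi xy))). split.
  - intros t z1 z2 Ht. destruct (Hc t (Cmul eta z1) (Cmul (Cconj eta) z2) Ht) as [L [M BM]].
    assert (Eq : forall n, Csum (K_term (fun n xy => Cmul u (c n (rhoi xy))) t z1 z2 n) (K_range m n)
       = Cmul u (Csum (K_term c t (Cmul eta z1) (Cmul (Cconj eta) z2) n) (K_range m n))).
    { intros n. rewrite <- (Csum_perm _ _ _ (K_range_rot m n rho rhoi H1 H2 H3)).
      rewrite Csum_map, <- Csum_scal. apply Csum_ext. intros xy _.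
      unfold K_term. rewrite H2, H4, Cconj_mul.
      replace (Cadd (Cadd (Cmul (NtoC n) t) (Cmul (Cmul (rK xy) eta) z1)) (Cmul (Cmul (Cconj (rK xy)) (Cconj eta)) z2))
        with (Cadd (Cadd (Cmul (NtoC n) t) (Cmul (rK xy) (Cmul eta z1))) (Cmul (Cconj (rK xy)) (Cmul (Cconj eta) z2))) by ring.
      ring. }
    split.
    + unfold slashI. fold u.
      replace (Cmul u (f t (Cmul eta z1) (Cmul (Cconj eta) z2))) with
        (Cadd (Cmul u (f t (Cmul eta z1) (Cmul (Cconj eta) z2))) C0) by ring.
      eapply Ccv_ext; [|apply (Ccv_lin u _ _ _ _ L (Ccv_const C0))].
      intros N; cbv beta.
      rewrite (Csum_ext (fun n => Csum (K_term (fun n xy => Cmul u (c n (rhoi xy))) t z1 z2 n) (K_range m n)) _ _ (fun n _ => Eq n)).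
      rewrite Csum_scal. ring.
    + exists (Cabs u * M). intros N.
      eapply Rle_trans; [|apply Rmult_le_compat_l; [apply Cabs_nonneg|apply (BM N)]].
      rewrite <- Rsum_scal. apply Rsum_le. intros n _.
      rewrite <- (Rsum_perm _ _ _ (K_range_rot m n rho rhoi H1 H2 H3)).
      rewrite Rsum_map, <- Rsum_scal. apply Req_le, Rsum_ext. intros xy _.
      unfold K_term. rewrite H2, H4, Cconj_mul, <- Cabs_mul. f_equal.
      replace (Cadd (Cadd (Cmul (NtoC n) t) (Cmul (Cmul (rK xy) eta) z1)) (Cmul (Cmul (Cconj (rK xy)) (Cconj eta)) z2))
        with (Cadd (Cadd (Cmul (NtoC n) t) (Cmul (rK xy) (Cmul eta z1))) (Cmul (Cconj (rK xy)) (Cmul (Cconj eta) z2))) by ring.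
      ring.
  - intros Hb n xy E. rewrite Cc; auto. ring.
    pose proof (H3 (rhoi xy)). rewrite H1 in H. lia.
Qed.

Lemma FK_slashI : forall b m k eta f, In eta unitsOK -> FK b m f -> FK b m (slashI k eta f).
Proof.
  intros b m k eta f Hin Hf. simpl in Hin.
  destruct Hin as [<-|[<-|[<-|[<-|[]]]]].
  - apply (FK_rot b m k C1 (fun xy => xy) (fun xy => xy)); auto.
    intros; ring.
  - apply (FK_rot b m k (Copp C1) (fun xy => (- fst xy, - snd xy)%Z) (fun xy => (- fst xy, - snd xy)%Z)); auto.
    intros [x y]; simpl; f_equal; ring. intros [x y]; simpl; f_equal; ring.
    intros [x y]; simpl; ring.
    intros [x y]; apply Ceq; cunf; rewrite !opp_IZR; field.
  - apply (FK_rot b m k Ci (fun xy => (- snd xy, fst xy)%Z) (fun xy => (snd xy, - fst xy)%Z)); auto.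
    intros [x y]; simpl; f_equal; ring. intros [x y]; simpl; f_equal; ring.
    intros [x y]; simpl; ring.
    intros [x y]; apply Ceq; cunf; rewrite ?opp_IZR; field.
  - apply (FK_rot b m k (Copp Ci) (fun xy => (snd xy, - fst xy)%Z) (fun xy => (- snd xy, fst xy)%Z)); auto.
    intros [x y]; simpl; f_equal; ring. intros [x y]; simpl; f_equal; ring.
    intros [x y]; simpl; ring.
    intros [x y]; apply Ceq; cunf; rewrite ?opp_IZR; field.
Qed.

Definition al : C := mkC (1/2) 0.
Definition be : C := mkC 0 (1/2).
Definition psi (p1 p2 : C -> C -> C) : C -> C -> C -> C :=
  fun t w1 w2 => Cmul (p1 t (Cmul al (Cadd w1 w2))) (p2 t (Cmul be (Csub w1 w2))).
Definition cprod (m : nat) (c1 c2 : nat -> Z -> C) (n : nat) (xy : Z * Z) : C :=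
  Csum (fun j => if indj m n j xy then Cmul (c1 j (fst xy)) (c2 (n - j)%nat (snd xy)) else C0)
       (seq 0 (S n)).

Lemma Rsum_swap : forall {A B} (f : A -> B -> R) l1 l2,
  Rsum (fun x => Rsum (fun y => f x y) l2) l1 = Rsum (fun y => Rsum (fun x => f x y) l1) l2.
Proof.
  intros A B f l1 l2; induction l1; simpl.
  clear; induction l2; simpl; auto. rewrite <- IHl2; ring.
  rewrite IHl1. rewrite <- Rsum_add2. auto.
Qed.
Lemma Rsum_filter : forall {A} (p : A -> bool) (f : A -> R) l,
  Rsum (fun x => if p x then f x else 0) l = Rsum f (filter p l).
Proof. intros; induction l; simpl; auto. destruct (p a); simpl; rewrite IHl; auto. ring. Qed.
Lemma Rsum_prod : forall {A B} (g : A -> R) (h : B -> R) l1 l2,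
  Rsum (fun xy => g (fst xy) * h (snd xy)) (list_prod l1 l2) = Rsum g l1 * Rsum h l2.
Proof.
  intros; induction l1; simpl; auto. ring.
  rewrite Rsum_app, IHl1, Rsum_map. simpl. rewrite Rsum_scal. ring.
Qed.

Lemma reorgC : forall (g h : nat -> Z -> C) m n,
  Csum (fun xy => Csum (fun j => if indj m n j xy then Cmul (g j (fst xy)) (h (n - j)%nat (snd xy)) else C0)
     (seq 0 (S n))) (K_range m n)
  = Csum (fun j => Cmul (Csum (g j) (cl_range m j)) (Csum (h (n - j)%nat) (cl_range m (n - j)))) (seq 0 (S n)).
Proof.
  intros. rewrite Csum_swap. apply Csum_ext. intros j Hj. apply in_seq in Hj.
  rewrite (Csum_filter (indj m n j) (fun xy => Cmul (g j (fst xy)) (h (n - j)%nat (snd xy)))).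
  rewrite (Csum_perm _ _ _ (K_range_split m n j ltac:(lia))). apply Csum_prod.
Qed.
Lemma reorgR : forall (g h : nat -> Z -> R) m n,
  Rsum (fun xy => Rsum (fun j => if indj m n j xy then g j (fst xy) * h (n - j)%nat (snd xy) else 0)
     (seq 0 (S n))) (K_range m n)
  = Rsum (fun j => Rsum (g j) (cl_range m j) * Rsum (h (n - j)%nat) (cl_range m (n - j))) (seq 0 (S n)).
Proof.
  intros. rewrite Rsum_swap. apply Rsum_ext. intros j Hj. apply in_seq in Hj.
  rewrite (Rsum_filter (indj m n j) (fun xy => g j (fst xy) * h (n - j)%nat (snd xy))).
  rewrite (Rsum_perm _ _ _ (K_range_split m n j ltac:(lia))). apply Rsum_prod.
Qed.

Lemma conv_rewriteR : forall (a b : nat -> R) N,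
  rps (fun n => Rsum (fun j => a j * b (n - j)%nat) (seq 0 (S n))) N
  = Rsum (fun j => a j * rps b (N - j)) (seq 0 (S N)).
Proof.
  intros a b N; unfold rps; induction N.
  - simpl. ring.
  - rewrite Rsum_seqS, IHN. rewrite (Rsum_seqS (fun j => a j * Rsum b (seq 0 (S (S N - j))))).
    rewrite (Rsum_seqS (fun j => a j * b (S N - j)%nat) (S N)).
    rewrite (Rsum_ext (fun j => a j * Rsum b (seq 0 (S (S N - j))))
       (fun j => a j * Rsum b (seq 0 (S (N - j))) + a j * b (S N - j)%nat)).
    rewrite Rsum_add2. replace (S N - S N)%nat with O by lia. simpl. ring.
    intros j Hj. apply in_seq in Hj. replace (S N - j)%nat with (S (N - j)) by lia.
    rewrite Rsum_seqS. ring.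
Qed.

Lemma NtoC_sub : forall n j, (j <= n)%nat -> NtoC n = Cadd (NtoC j) (NtoC (n - j)).
Proof. intros; apply Ceq; cunf; rewrite ?minus_INR by lia; ring. Qed.

Lemma ee_prod : forall (c1 c2 : nat -> Z -> C) t z1 z2 n j x y, (j <= n)%nat ->
  Cmul (cl_term c1 t (Cmul al (Cadd z1 z2)) j x) (cl_term c2 t (Cmul be (Csub z1 z2)) (n - j) y)
  = Cmul (Cmul (c1 j x) (c2 (n - j)%nat y))
      (ee (Cadd (Cadd (Cmul (NtoC n) t) (Cmul (rK (x, y)) z1)) (Cmul (Cconj (rK (x, y))) z2))).
Proof.
  intros. unfold cl_term. rewrite (NtoC_sub n j) by auto.
  transitivity (Cmul (Cmul (c1 j x) (c2 (n - j)%nat y))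
     (ee (Cadd (Cadd (Cmul (NtoC j) t) (Cmul (ZtoC x) (Cmul al (Cadd z1 z2))))
               (Cadd (Cmul (NtoC (n - j)) t) (Cmul (ZtoC y) (Cmul be (Csub z1 z2))))))).
  rewrite (ee_add (Cadd (Cmul (NtoC j) t) (Cmul (ZtoC x) (Cmul al (Cadd z1 z2))))); ring.
  f_equal. apply ee_ext. unfold al, be. destruct z1, z2. apply Ceq; cunf; field.
Qed.

Lemma Csum_scal_r : forall {A} (a : C) (f : A -> C) l,
  Cmul (Csum f l) a = Csum (fun x => Cmul (f x) a) l.
Proof. intros; induction l; simpl. ring. rewrite <- IHl; ring. Qed.

Lemma Kt_eq : forall m c1 c2 t z1 z2 n xy,
  K_term (cprod m c1 c2) t z1 z2 n xy =
  Csum (fun j => if indj m n j xy then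
     Cmul (cl_term c1 t (Cmul al (Cadd z1 z2)) j (fst xy)) (cl_term c2 t (Cmul be (Csub z1 z2)) (n - j) (snd xy))
     else C0) (seq 0 (S n)).
Proof.
  intros. unfold K_term, cprod. rewrite Csum_scal_r. apply Csum_ext. intros j Hj.
  apply in_seq in Hj. destruct (indj m n j xy). rewrite ee_prod by lia. destruct xy; reflexivity. ring.
Qed.

Lemma FK_prod_fourier : forall m p1 p2 c1 c2,
  HasFourier_cl m p1 c1 -> HasFourier_cl m p2 c2 ->
  HasFourier_K m (psi p1 p2) (cprod m c1 c2).
Proof.
  intros m p1 p2 c1 c2 H1 H2 t z1 z2 Ht.
  set (W1 := Cmul al (Cadd z1 z2)). set (W2 := Cmul be (Csub z1 z2)).
  destruct (H1 t W1 Ht) as [L1 [M1 B1]]. destruct (H2 t W2 Ht) as [L2 [M2 B2]].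
  set (A := fun j => Csum (cl_term c1 t W1 j) (cl_range m j)).
  set (B := fun j => Csum (cl_term c2 t W2 j) (cl_range m j)).
  assert (Key : forall n, Csum (K_term (cprod m c1 c2) t z1 z2 n) (K_range m n) =
            Csum (fun j => Cmul (A j) (B (n - j)%nat)) (seq 0 (S n))).
  { intros n. rewrite (Csum_ext _ _ _ (fun xy _ => Kt_eq m c1 c2 t z1 z2 n xy)).
    apply (reorgC (cl_term c1 t W1) (cl_term c2 t W2)). }
  split.
  - unfold psi. fold W1 W2.
    eapply Ccv_ext; [|apply (cauchy_prod A B _ _ M1 L1 L2)].
    intros N. unfold ps. apply Csum_ext. intros n _. symmetry; apply Key.
    intros N. unfold rps. eapply Rle_trans; [|apply (B1 N)]. apply Rsum_le. intros j _.
    apply Cabs_Csum.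
  - exists (M1 * M2). intros N.
    set (a := fun j => Rsum (fun x => Cabs (cl_term c1 t W1 j x)) (cl_range m j)).
    set (b := fun j => Rsum (fun x => Cabs (cl_term c2 t W2 j x)) (cl_range m j)).
    assert (Ha0 : forall j, 0 <= a j) by (intros; apply Rsum_nonneg; intros; apply Cabs_nonneg).
    assert (Hb0 : forall j, 0 <= b j) by (intros; apply Rsum_nonneg; intros; apply Cabs_nonneg).
    assert (HM2 : 0 <= M2). { pose proof (B2 O) as HB. change (Rsum b (seq 0 1) <= M2) in HB.
      simpl in HB. specialize (Hb0 O). lra. }
    eapply Rle_trans. apply (Rsum_le _ (fun n => Rsum (fun j => a j * b (n - j)%nat) (seq 0 (S n)))).
    + intros n _. unfold a, b. rewrite <- (reorgR (fun j x => Cabs (cl_term c1 t W1 j x)) (fun j x => Cabs (cl_term c2 t W2 j x))).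
      apply Rsum_le. intros xy _. rewrite Kt_eq. eapply Rle_trans. apply Cabs_Csum.
      apply Req_le, Rsum_ext. intros j _. destruct (indj m n j xy). apply Cabs_mul. apply Cabs_C0.
    + fold (rps (fun n => Rsum (fun j => a j * b (n - j)%nat) (seq 0 (S n))) N).
      rewrite conv_rewriteR.
      eapply Rle_trans. apply (Rsum_le _ (fun j => M2 * a j)).
      intros j _. rewrite Rmult_comm. apply Rmult_le_compat_r; auto. apply B2.
      rewrite Rsum_scal. rewrite Rmult_comm. apply Rmult_le_compat_r; [auto|apply B1].
Qed.

Lemma cprod_cusp : forall m c1 c2,
  (forall n r, (4 * Z.of_nat n * Z.of_nat m = r * r)%Z -> c1 n r = C0) ->
  cuspc m (cprod m c1 c2).
Proof.
  intros m c1 c2 H n [x y] E. cbn [fst snd] in E. unfold cprod.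
  rewrite (Csum_ext _ (fun _ => C0)). apply Csum_zero.
  intros j Hj. apply in_seq in Hj. unfold indj. cbn [fst snd].
  destruct (Z.leb_spec (x * x) (4 * Z.of_nat j * Z.of_nat m)); cbn [andb]; auto.
  destruct (Z.leb_spec (y * y) (4 * Z.of_nat (n - j) * Z.of_nat m)); cbn [andb]; auto.
  rewrite H. ring. rewrite Nat2Z.inj_sub in H1 by lia. nia.
Qed.

Lemma j_nz : forall a b c d t, (a * d - b * c = 1)%Z -> inH t ->
  Cadd (Cmul (ZtoC c) t) (ZtoC d) <> C0.
Proof.
  intros a b c d t Hdet Ht E. unfold inH in Ht.
  assert (E1 := f_equal Re E); assert (E2 := f_equal Im E).
  destruct t as [x y]; cunf; simpl in *.
  assert (IZR c = 0) by nra. apply eq_IZR in H. subst c.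
  assert (IZR d = 0) by nra. apply eq_IZR in H. subst d. lia.
Qed.

Lemma Cpow_C1 : forall k, Cpow C1 k = C1.
Proof. induction k; simpl; auto. rewrite IHk; ring. Qed.
Lemma Cinv_C1 : Cinv C1 = C1.
Proof. apply Ceq; unfold Cinv; simpl; field. Qed.
Lemma Cconj_C1 : Cconj C1 = C1.
Proof. ceq. Qed.

Lemma solve_slash : forall P A X Y, P <> C0 ->
  Cmul (Cinv P) (Cmul (ee (Copp A)) X) = Y -> X = Cmul (Cmul P (ee A)) Y.
Proof.
  intros P A X Y HP H. rewrite <- H.
  transitivity (Cmul (Cmul (Cinv P) P) (Cmul (Cmul (ee (Copp A)) (ee A)) X)).
  rewrite ee_opp, Cinv_l; auto; ring. ring.
Qed.
Lemma solve_heis : forall A X Y, Cmul (ee A) X = Y -> X = Cmul (ee (Copp A)) Y.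
Proof.
  intros A X Y H. rewrite <- H.
  transitivity (Cmul (Cmul (ee (Copp A)) (ee A)) X). rewrite ee_opp; ring. ring.
Qed.

Definition inv1 (k m : nat) (f : C -> C -> C -> C) : Prop :=
  (forall a b c d : Z, (a * d - b * c = 1)%Z ->
     forall t z1 z2, inH t -> slashK k m C1 a b c d f t z1 z2 = f t z1 z2) /\
  (forall a b a' b' : Z, forall t z1 z2, inH t ->
     heisK m (gauss a b) (gauss a' b') f t z1 z2 = f t z1 z2).

Lemma psi_inv : forall k1 k2 m p1 p2, jacobi_cl_inv k1 m p1 -> jacobi_cl_inv k2 m p2 ->
  inv1 (k1 + k2) m (psi p1 p2).
Proof.
  intros k1 k2 m p1 p2 [_ [S1 H1]] [_ [S2 H2]]. split.
  - intros a b c d Hdet t z1 z2 Ht. unfold slashK, psi.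
    set (j := Cadd (Cmul (ZtoC c) t) (ZtoC d)).
    assert (Hj : j <> C0) by (apply (j_nz a b c d t); auto).
    set (W1 := Cmul al (Cadd z1 z2)). set (W2 := Cmul be (Csub z1 z2)).
    pose proof (S1 a b c d Hdet t W1 Ht) as E1. pose proof (S2 a b c d Hdet t W2 Ht) as E2.
    unfold slash_cl in E1, E2. fold j in E1, E2.
    replace (Cdiv (Cmul (Cmul (NtoC m) (ZtoC c)) (Cmul W1 W1)) j) with
      (Cdiv (Cmul (Cmul (NtoC m) (ZtoC c)) (Cmul W1 W1)) j) in E1 by reflexivity.
    apply solve_slash in E1; [|apply Cpow_nz; auto].
    apply solve_slash in E2; [|apply Cpow_nz; auto].
    replace (Cmul al (Cadd (Cdiv (Cmul C1 z1) j) (Cdiv (Cmul (Cconj C1) z2) j))) with (Cdiv W1 j)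
      by (unfold W1, Cdiv; rewrite Cconj_C1; ring).
    replace (Cmul be (Csub (Cdiv (Cmul C1 z1) j) (Cdiv (Cmul (Cconj C1) z2) j))) with (Cdiv W2 j)
      by (unfold W2, Cdiv; rewrite Cconj_C1; ring).
    rewrite E1, E2, Cpow_C1, Cinv_C1, Cpow_add.
    set (A1 := Cdiv (Cmul (Cmul (NtoC m) (ZtoC c)) (Cmul W1 W1)) j).
    set (A2 := Cdiv (Cmul (Cmul (NtoC m) (ZtoC c)) (Cmul W2 W2)) j).
    set (A := Cdiv (Cmul (Cmul (NtoC m) (ZtoC c)) (Cmul z1 z2)) j).
    assert (EE : Cmul (ee (Copp A)) (Cmul (ee A1) (ee A2)) = C1).
    { rewrite <- ee_add, <- ee_add, <- ee_0. apply ee_ext.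
      unfold A, A1, A2, W1, W2, Cdiv, al, be. generalize (Cinv j). intros u.
      destruct z1, z2, u. apply Ceq; cunf; field. }
    assert (HP1 := Cpow_nz j k1 Hj). assert (HP2 := Cpow_nz j k2 Hj).
    transitivity (Cmul (Cmul (Cmul (Cinv (Cmul (Cpow j k1) (Cpow j k2))) (Cmul (Cpow j k1) (Cpow j k2)))
        (Cmul (ee (Copp A)) (Cmul (ee A1) (ee A2)))) (Cmul (p1 t W1) (p2 t W2))).
    ring. rewrite EE, Cinv_l by (apply Cmul_nz; auto). ring.
  - intros a b a' b' t z1 z2 Ht. unfold heisK, psi.
    set (W1 := Cmul al (Cadd z1 z2)). set (W2 := Cmul be (Csub z1 z2)).
    pose proof (H1 a a' t W1 Ht) as E1. pose proof (H2 (- b)%Z (- b')%Z t W2 Ht) as E2.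
    unfold heis_cl in E1, E2. apply solve_heis in E1. apply solve_heis in E2.
    replace (Cmul al (Cadd (Cadd (Cadd z1 (Cmul (gauss a b) t)) (gauss a' b'))
               (Cadd (Cadd z2 (Cmul (Cconj (gauss a b)) t)) (Cconj (gauss a' b')))))
      with (Cadd (Cadd W1 (Cmul (ZtoC a) t)) (ZtoC a'))
      by (unfold W1, al; destruct z1, z2, t; apply Ceq; cunf; field).
    replace (Cmul be (Csub (Cadd (Cadd z1 (Cmul (gauss a b) t)) (gauss a' b'))
               (Cadd (Cadd z2 (Cmul (Cconj (gauss a b)) t)) (Cconj (gauss a' b')))))
      with (Cadd (Cadd W2 (Cmul (ZtoC (- b)) t)) (ZtoC (- b')))
      by (unfold W2, be; destruct z1, z2, t; apply Ceq; cunf; rewrite ?opp_IZR; field).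
    rewrite E1, E2.
    set (B1 := Cmul (NtoC m) (Cadd (Cmul (ZtoC (a * a)) t) (Cmul (ZtoC (2 * a)) W1))).
    set (B2 := Cmul (NtoC m) (Cadd (Cmul (ZtoC (- b * - b)) t) (Cmul (ZtoC (2 * - b)) W2))).
    set (S := Cmul (NtoC m) (Cadd (Cadd (Cmul (Nrm (gauss a b)) t) (Cmul (Cconj (gauss a b)) z1))
                 (Cmul (gauss a b) z2))).
    assert (EE : Cmul (ee S) (Cmul (ee (Copp B1)) (ee (Copp B2))) = C1).
    { rewrite <- ee_add, <- ee_add, <- ee_0. apply ee_ext.
      unfold S, B1, B2, W1, W2, al, be. destruct z1, z2, t. apply Ceq; cunf;
      rewrite ?mult_IZR, ?opp_IZR; field. }
    transitivity (Cmul (Cmul (ee S) (Cmul (ee (Copp B1)) (ee (Copp B2)))) (Cmul (p1 t W1) (p2 t W2))).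
    ring. rewrite EE; ring.
Qed.

Definition goodunit (eta : C) : Prop :=
  eta <> C0 /\ Cconj eta = Cinv eta /\
  forall a b, exists a2 b2, gauss a2 b2 = Cmul eta (gauss a b).

Lemma units_good : forall eta, In eta unitsOK -> goodunit eta.
Proof.
  intros eta Hin. simpl in Hin. destruct Hin as [<-|[<-|[<-|[<-|[]]]]]; split; try split.
  - exact C1_neq_C0.
  - apply Ceq; unfold Cinv; cunf; field.
  - intros a b; exists a, b; apply Ceq; cunf; ring.
  - intro E; assert (E1 := f_equal Re E); cunf; simpl in E1; lra.
  - apply Ceq; unfold Cinv; cunf; field.
  - intros a b; exists (-a)%Z, (-b)%Z; apply Ceq; cunf; rewrite !opp_IZR; ring.
  - intro E; assert (E1 := f_equal Im E); cunf; simpl in E1; lra.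
  - apply Ceq; unfold Cinv; cunf; field.
  - intros a b; exists (-b)%Z, a; apply Ceq; cunf; rewrite ?opp_IZR; ring.
  - intro E; assert (E1 := f_equal Im E); cunf; simpl in E1; lra.
  - apply Ceq; unfold Cinv; cunf; field.
  - intros a b; exists b, (-a)%Z; apply Ceq; cunf; rewrite ?opp_IZR; ring.
Qed.

Lemma slashI_inv1 : forall k m eta f, goodunit eta -> inv1 k m f -> inv1 k m (slashI k eta f).
Proof.
  intros k m eta f [Hnz [Hc Hg]] [S Hh]. split.
  - intros a b c d Hdet t z1 z2 Ht. unfold slashI.
    rewrite <- (S a b c d Hdet t (Cmul eta z1) (Cmul (Cconj eta) z2) Ht).
    unfold slashK. rewrite Hc, Cconj_C1.
    set (j := Cadd (Cmul (ZtoC c) t) (ZtoC d)).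
    replace (Cmul (Cmul eta z1) (Cmul (Cinv eta) z2)) with (Cmul z1 z2) by (field; auto).
    replace (Cmul eta (Cdiv (Cmul C1 z1) j)) with (Cdiv (Cmul C1 (Cmul eta z1)) j) by (unfold Cdiv; ring).
    replace (Cmul (Cinv eta) (Cdiv (Cmul C1 z2) j)) with (Cdiv (Cmul C1 (Cmul (Cinv eta) z2)) j) by (unfold Cdiv; ring).
    ring.
  - intros a b a' b' t z1 z2 Ht. unfold slashI.
    destruct (Hg a b) as [a2 [b2 Eg]]. destruct (Hg a' b') as [a3 [b3 Eg']].
    rewrite <- (Hh a2 b2 a3 b3 t (Cmul eta z1) (Cmul (Cconj eta) z2) Ht).
    unfold heisK. rewrite Eg, Eg'. unfold Nrm. rewrite !Cconj_mul, Hc.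
    replace (Cmul eta (Cadd (Cadd z1 (Cmul (gauss a b) t)) (gauss a' b'))) with
      (Cadd (Cadd (Cmul eta z1) (Cmul (Cmul eta (gauss a b)) t)) (Cmul eta (gauss a' b'))) by ring.
    replace (Cmul (Cinv eta) (Cadd (Cadd z2 (Cmul (Cconj (gauss a b)) t)) (Cconj (gauss a' b')))) with
      (Cadd (Cadd (Cmul (Cinv eta) z2) (Cmul (Cmul (Cinv eta) (Cconj (gauss a b))) t)) (Cmul (Cinv eta) (Cconj (gauss a' b')))) by ring.
    replace (Cmul (NtoC m) (Cadd (Cadd (Cmul (Cmul (Cmul eta (gauss a b)) (Cmul (Cinv eta) (Cconj (gauss a b)))) t)
             (Cmul (Cmul (Cinv eta) (Cconj (gauss a b))) (Cmul eta z1))) (Cmul (Cmul eta (gauss a b)) (Cmul (Cinv eta) z2))))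
      with (Cmul (NtoC m) (Cadd (Cadd (Cmul (Cmul (gauss a b) (Cconj (gauss a b))) t) (Cmul (Cconj (gauss a b)) z1))
             (Cmul (gauss a b) z2))) by (field; auto).
    ring.
Qed.

Lemma inv1_Csum : forall {A} k m (F : A -> C -> C -> C -> C) l,
  (forall e, In e l -> inv1 k m (F e)) ->
  inv1 k m (fun t z1 z2 => Csum (fun e => F e t z1 z2) l).
Proof.
  intros A k m F l H. split.
  - intros a b c d Hdet t z1 z2 Ht. unfold slashK.
    rewrite <- !Csum_scal. apply Csum_ext. intros e He.
    destruct (H e He) as [S _]. rewrite <- (S a b c d Hdet t z1 z2 Ht). reflexivity.
  - intros a b a' b' t z1 z2 Ht. unfold heisK. rewrite <- Csum_scal. apply Csum_ext. intros e He.
    destruct (H e He) as [_ Hh]. rewrite <- (Hh a b a' b' t z1 z2 Ht). reflexivity.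
Qed.

Lemma lam_term : forall k m f a b c d t z1 z2 eta eps,
  (a * d - b * c = 1)%Z -> inH t -> inv1 k m f -> goodunit eta -> goodunit eps ->
  goodunit (Cmul eta eps) ->
  let j := Cadd (Cmul (ZtoC c) t) (ZtoC d) in
  Cmul (Cinv (Cpow eps k)) (Cmul (Cinv (Cpow j k))
     (Cmul (ee (Copp (Cdiv (Cmul (Cmul (NtoC m) (ZtoC c)) (Cmul z1 z2)) j)))
       (slashI k eta f (moebius a b c d t) (Cdiv (Cmul eps z1) j) (Cdiv (Cmul (Cconj eps) z2) j))))
  = slashI k (Cmul eta eps) f t z1 z2.
Proof.
  intros k m f a b c d t z1 z2 eta eps Hdet Ht [S _] [Hn1 [Hc1 _]] [Hn2 [Hc2 _]] [Hn3 [Hc3 _]] j.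
  assert (Cpow eta k <> C0) by (apply Cpow_nz; auto).
  assert (Cpow eps k <> C0) by (apply Cpow_nz; auto).
  assert (Hj : j <> C0) by (apply (j_nz a b c d t); auto).
  assert (Cpow j k <> C0) by (apply Cpow_nz; auto).
  unfold slashI. rewrite <- (S a b c d Hdet t (Cmul (Cmul eta eps) z1) (Cmul (Cconj (Cmul eta eps)) z2) Ht).
  unfold slashK. fold j. rewrite Hc3, Cconj_C1, Cpow_C1, Cinv_C1, Cpow_mul. rewrite Hc2.
  replace (Cmul (Cmul (Cmul eta eps) z1) (Cmul (Cinv (Cmul eta eps)) z2)) with (Cmul z1 z2) by (field; repeat split; auto).
  replace (Cmul eta (Cdiv (Cmul eps z1) j)) with (Cdiv (Cmul C1 (Cmul (Cmul eta eps) z1)) j) by (unfold Cdiv; ring).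
  rewrite Hc1.
  replace (Cmul (Cinv eta) (Cdiv (Cmul (Cinv eps) z2) j)) with
    (Cdiv (Cmul C1 (Cmul (Cinv (Cmul eta eps)) z2)) j) by (unfold Cdiv; field; repeat split; auto).
  field; repeat split; auto.
Qed.

Lemma goodunit_mul : forall a b, goodunit a -> goodunit b -> goodunit (Cmul a b).
Proof.
  intros a b [Ha [Hca Hga]] [Hb [Hcb Hgb]]. split; [|split].
  - apply Cmul_nz; auto.
  - rewrite Cconj_mul, Hca, Hcb. field; auto.
  - intros x y. destruct (Hgb x y) as [x1 [y1 E1]]. destruct (Hga x1 y1) as [x2 [y2 E2]].
    exists x2, y2. rewrite E2, E1. ring.
Qed.

Lemma Lambda_inv : forall k m phi, inv1 k m phi ->
  forall eps, In eps unitsOK -> forall a b c d, (a * d - b * c = 1)%Z ->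
  forall t z1 z2, inH t -> slashK k m eps a b c d (LambdaK k phi) t z1 z2 = LambdaK k phi t z1 z2.
Proof.
  intros k m phi Hphi eps Heps a b c d Hdet t z1 z2 Ht.
  unfold slashK. unfold LambdaK at 1. rewrite <- !Csum_scal.
  rewrite (Csum_ext _ (fun eta => slashI k (Cmul eta eps) phi t z1 z2)).
  2:{ intros eta Heta. apply (lam_term k m phi a b c d t z1 z2 eta eps); auto.
      apply units_good; auto. apply units_good; auto.
      apply goodunit_mul; apply units_good; auto. }
  unfold LambdaK. simpl in Heps. cbn [Csum fold_right unitsOK].
  destruct Heps as [<-|[<-|[<-|[<-|[]]]]].
  - replace (Cmul C1 C1) with C1 by ceq. replace (Cmul (Copp C1) C1) with (Copp C1) by ceq.
    replace (Cmul Ci C1) with Ci by ceq. replace (Cmul (Copp Ci) C1) with (Copp Ci) by ceq. ring.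
  - replace (Cmul C1 (Copp C1)) with (Copp C1) by ceq. replace (Cmul (Copp C1) (Copp C1)) with C1 by ceq.
    replace (Cmul Ci (Copp C1)) with (Copp Ci) by ceq. replace (Cmul (Copp Ci) (Copp C1)) with Ci by ceq. ring.
  - replace (Cmul C1 Ci) with Ci by ceq. replace (Cmul (Copp C1) Ci) with (Copp Ci) by ceq.
    replace (Cmul Ci Ci) with (Copp C1) by ceq. replace (Cmul (Copp Ci) Ci) with C1 by ceq. ring.
  - replace (Cmul C1 (Copp Ci)) with (Copp Ci) by ceq. replace (Cmul (Copp C1) (Copp Ci)) with Ci by ceq.
    replace (Cmul Ci (Copp Ci)) with C1 by ceq. replace (Cmul (Copp Ci) (Copp Ci)) with (Copp C1) by ceq. ring.
Qed.

Lemma funext3 : forall (f g : C -> C -> C -> C), (forall t z1 z2, f t z1 z2 = g t z1 z2) -> f = g.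
Proof.
  intros f g H. apply functional_extensionality; intro t; apply functional_extensionality; intro z1;
  apply functional_extensionality; intro z2; auto.
Qed.

Lemma LambdaK_lin : forall k a phi psi,
  LambdaK k (lin3 a phi psi) = lin3 a (LambdaK k phi) (LambdaK k psi).
Proof.
  intros. apply funext3; intros. unfold LambdaK, lin3. rewrite <- Csum_lin.
  apply Csum_ext; intros. unfold slashI. ring.
Qed.

Lemma Hmap_lin1 : forall k1 k2 a phi1 phi1' phi2,
  Hmap k1 k2 (lin2 a phi1 phi1') phi2 = lin3 a (Hmap k1 k2 phi1 phi2) (Hmap k1 k2 phi1' phi2).
Proof.
  intros. apply funext3; intros. unfold Hmap, lin3, lin2. rewrite <- Csum_lin.
  apply Csum_ext; intros. unfold slashI. ring.
Qed.

Lemma Hmap_lin2 : forall k1 k2 a phi1 phi2 phi2',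
  Hmap k1 k2 phi1 (lin2 a phi2 phi2') = lin3 a (Hmap k1 k2 phi1 phi2) (Hmap k1 k2 phi1 phi2').
Proof.
  intros. apply funext3; intros. unfold Hmap, lin3, lin2. rewrite <- Csum_lin.
  apply Csum_ext; intros. unfold slashI. ring.
Qed.

Lemma Hmap_psi : forall k1 k2 p1 p2,
  Hmap k1 k2 p1 p2 = fun t z1 z2 => Csum (fun e => slashI (k1 + k2) e (psi p1 p2) t z1 z2) unitsOK.
Proof. reflexivity. Qed.

Lemma al_nz : al <> C0.
Proof. intro E; assert (E1 := f_equal Re E); unfold al in E1; simpl in E1; lra. Qed.
Lemma be_nz : be <> C0.
Proof. intro E; assert (E1 := f_equal Im E); unfold be in E1; simpl in E1; lra. Qed.

Lemma inv1_of : forall units k m f, jacobiK_inv units k m f -> In C1 units -> inv1 k m f.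
Proof.
  intros units k m f [_ [S H]] Hin. split; auto.
Qed.

Lemma jinv1_of : forall k m f, holo3 f -> inv1 k m f -> jacobiK_inv (C1 :: nil) k m f.
Proof.
  intros k m f Hh [S H]. split; auto. split; auto.
  intros eps [<-|[]]; auto.
Qed.

Lemma Lambda_J : forall k m phi b, holo3 phi -> inv1 k m phi -> FK b m phi ->
  jacobiK_inv unitsOK k m (LambdaK k phi) /\ FK b m (LambdaK k phi).
Proof.
  intros k m phi b Hh Hi Hf.
  assert (I1 : inv1 k m (LambdaK k phi)).
  { apply (inv1_Csum k m (fun e => slashI k e phi)). intros e He.
    apply slashI_inv1; auto. apply units_good; auto. }
  split; [split; [|split]|].
  - apply (holo3_Csum (fun e => slashI k e phi)). intros e He.
    apply holo3_slashI; auto. apply units_good; auto.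
  - intros eps Heps. apply Lambda_inv; auto.
  - apply I1.
  - apply (FK_Csum b m (fun e => slashI k e phi)). intros e He. apply FK_slashI; auto.
Qed.

Lemma H_J : forall k1 k2 m p1 p2 b, jacobi_cl_inv k1 m p1 -> jacobi_cl_inv k2 m p2 ->
  FK b m (psi p1 p2) ->
  holo3 (Hmap k1 k2 p1 p2) /\ inv1 (k1 + k2) m (Hmap k1 k2 p1 p2) /\ FK b m (Hmap k1 k2 p1 p2).
Proof.
  intros k1 k2 m p1 p2 b J1 J2 Hf. rewrite Hmap_psi. split; [|split].
  - apply (holo3_Csum (fun e => slashI (k1 + k2) e (psi p1 p2))). intros e He.
    apply holo3_slashI. apply units_good; auto.
    apply holo3_prod. apply al_nz. apply be_nz. apply J1. apply J2.
  - apply (inv1_Csum (k1 + k2) m (fun e => slashI (k1 + k2) e (psi p1 p2))). intros e He.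
    apply slashI_inv1. apply units_good; auto. apply psi_inv; auto.
  - apply (FK_Csum b m (fun e => slashI (k1 + k2) e (psi p1 p2))). intros e He. apply FK_slashI; auto.
Qed.

Theorem corollary4p6 (k1 k2 m : nat) (hk1 : (0 < k1)%nat) (hk2 : (0 < k2)%nat)
  (hm : (0 < m)%nat) :
  (forall phi, JacobiForm1_K (k1 + k2) m phi ->
     JacobiForm_K (k1 + k2) m (LambdaK (k1 + k2) phi)) /\
  (forall a phi psi,
     LambdaK (k1 + k2) (lin3 a phi psi)
     = lin3 a (LambdaK (k1 + k2) phi) (LambdaK (k1 + k2) psi)) /\
  (forall phi1 phi2, JacobiForm_cl k1 m phi1 -> JacobiForm_cl k2 m phi2 ->
     JacobiForm1_K (k1 + k2) m (Hmap k1 k2 phi1 phi2)) /\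
  (forall a phi1 phi1' phi2,
     Hmap k1 k2 (lin2 a phi1 phi1') phi2
     = lin3 a (Hmap k1 k2 phi1 phi2) (Hmap k1 k2 phi1' phi2)) /\
  (forall a phi1 phi2 phi2',
     Hmap k1 k2 phi1 (lin2 a phi2 phi2')
     = lin3 a (Hmap k1 k2 phi1 phi2) (Hmap k1 k2 phi1 phi2')) /\
  (forall phi1 phi2, JacobiCusp_cl k1 m phi1 -> JacobiCusp_cl k2 m phi2 ->
     JacobiCusp_K (k1 + k2) m (LambdaK (k1 + k2) (Hmap k1 k2 phi1 phi2))).
Proof.
  split; [|split; [|split; [|split; [|split]]]].
  - intros phi [Jinv [c Hc]].
    assert (Hf : FK false m phi) by (exists c; split; auto; discriminate).
    destruct (Lambda_J (k1 + k2) m phi false (proj1 Jinv) (inv1_of _ _ _ _ Jinv (or_introl eq_refl)) Hf)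
      as [A [c' [B _]]].
    split; auto. exists c'; auto.
  - intros; apply LambdaK_lin.
  - intros p1 p2 [J1 [c1 F1]] [J2 [c2 F2]].
    assert (Hf : FK false m (psi p1 p2)).
    { exists (cprod m c1 c2); split. apply FK_prod_fourier; auto. discriminate. }
    destruct (H_J k1 k2 m p1 p2 false J1 J2 Hf) as [Hh [Hi [c [Hc _]]]].
    split. apply jinv1_of; auto. exists c; auto.
  - intros; apply Hmap_lin1.
  - intros; apply Hmap_lin2.
  - intros p1 p2 [J1 [c1 [F1 C1']]] [J2 [c2 [F2 C2']]].
    assert (Hf0 : FK true m (psi p1 p2)).
    { exists (cprod m c1 c2); split. apply FK_prod_fourier; auto. intros _. apply cprod_cusp; auto. }
    destruct (H_J k1 k2 m p1 p2 true J1 J2 Hf0) as [Hh [Hi Hf]].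
    destruct (Lambda_J (k1 + k2) m (Hmap k1 k2 p1 p2) true Hh Hi Hf) as [A [c [B Cc]]].
    split; auto. exists c; split; auto.
    intros n xy E. apply (Cc eq_refl). auto.
Qed.
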